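(* Let $\{\phi_j\}_{j\in\mathbb Z}$ be the Fourier basis $\phi_j(t)=e^{\mathrm ij\pi t}$, $T=\{t_n\}_{n=1}^N\subseteq[-1,1]$ a set of $N$ scattered data points with density $h$. Then for each $0<\epsilon<1$ there exists $c(\epsilon)>0$ such that if $h\le c(\epsilon)M^{-1}$, then the least-squares problem $\min_z\|UP_Mz-y\|$ over $z$ supported in $\{-M,\dots,M-1\}$ has a unique solution $\check x$, and it satisfies $$\|x-\check x\|\le\left(1+\frac1{\sqrt{1-\epsilon}}\right)\|x-P_Mx\|_{1,w}+\frac1{\sqrt{1-\epsilon}}\eta$$ for any weights $w=\{w_i\}$ with $w_i\ge1$.
   Context: Fourier setting: $D=(-1,1)$, $\nu=1/2$, basis indexed by $\mathbb Z$. $h=\sup_{t\in(-1,1)}\min_n|t-t_n|$; Voronoi cells $V_n=\{t\in(-1,1):|t-t_n|\le|t-t_m|\ \forall m\ne n\}$; $\tau_n=\int_{V_n}\nu$. $U_{n,j}=\sqrt{\tau_n}\phi_j(t_n)$, $j\in\mathbb Z$. $P_M$ is the coordinate projection onto indices $\{-M,\dots,M-1\}$. $\|z\|_{1,w}=\sum_{i\in\mathbb Z}w_i|z_i|$, $\|\cdot\|$ the $\ell^2$ norm. Target $f=\sum_jx_j\phi_j$ with coefficient sequence $x$; data $y=\{\sqrt{\tau_n}(f(t_n)+e_n)\}$, $|e_n|\le\eta$. *)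

(* Defs.v *)
From Stdlib Require Import Reals ZArith Lra ClassicalEpsilon.
From Coquelicot Require Import Coquelicot.
Open Scope R_scope.

Definition phi (j : Z) (t : R) : C := (cos (IZR j * PI * t), sin (IZR j * PI * t)).

Fixpoint Csum (f : nat -> C) (n : nat) : C :=
  match n with O => RtoC 0 | S k => Cplus (Csum f k) (f k) end.
Fixpoint Rsum (f : nat -> R) (n : nat) : R :=
  match n with O => 0 | S k => Rsum f k + f k end.

Definition is_zsum (a : Z -> C) (s : C) : Prop :=
  exists s1 s2 : C,
    is_series (fun k : nat => a (Z.of_nat k)) s1 /\
    is_series (fun k : nat => a (- Z.of_nat (S k))%Z) s2 /\
    s = Cplus s1 s2.
Definition ex_zseriesR (a : Z -> R) : Prop :=
  ex_series (fun k : nat => a (Z.of_nat k)) /\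
  ex_series (fun k : nat => a (- Z.of_nat (S k))%Z).
Definition zSeriesR (a : Z -> R) : R :=
  Series (fun k : nat => a (Z.of_nat k)) + Series (fun k : nat => a (- Z.of_nat (S k))%Z).

Definition l2norm (z : Z -> C) : R := sqrt (zSeriesR (fun j => (Cmod (z j))^2)).
Definition w1norm (w : Z -> R) (z : Z -> C) : R := zSeriesR (fun j => w j * Cmod (z j)).

Definition PM (M : nat) (x : Z -> C) : Z -> C :=
  fun j => if andb (Z.leb (- Z.of_nat M) j) (Z.ltb j (Z.of_nat M)) then x j else RtoC 0.
Definition supported_in (M : nat) (z : Z -> C) : Prop :=
  forall j : Z, (j < - Z.of_nat M \/ Z.of_nat M <= j)%Z -> z j = RtoC 0.

Fixpoint mindist (tp : nat -> R) (t : R) (k : nat) : R :=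
  match k with
  | O => Rabs (t - tp O)
  | S k' => Rmin (mindist tp t k') (Rabs (t - tp (S k)))
  end.
Definition density (tp : nat -> R) (N : nat) : Rbar :=
  Lub_Rbar (fun r => exists t, -1 < t < 1 /\ r = mindist tp t (N - 1)).

Definition voronoi (tp : nat -> R) (N n : nat) (t : R) : Prop :=
  -1 < t < 1 /\ forall m : nat, (m < N)%nat -> m <> n -> Rabs (t - tp n) <= Rabs (t - tp m).
Definition indicator (P : R -> Prop) (t : R) : R :=
  if excluded_middle_informative (P t) then 1 else 0.
(* tau_n = int_{V_n} nu, with nu = (1/2) dt on (-1,1) *)
Definition tau (tp : nat -> R) (N n : nat) : R :=
  RInt (fun t => / 2 * indicator (voronoi tp N n) t) (-1) 1.

Definition Umat (tp : nat -> R) (N n : nat) (j : Z) : C :=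
  Cmult (RtoC (sqrt (tau tp N n))) (phi j (tp n)).

Definition UPM (tp : nat -> R) (N M : nat) (z : Z -> C) (n : nat) : C :=
  Csum (fun k => let j := (Z.of_nat k - Z.of_nat M)%Z in Cmult (Umat tp N n j) (z j)) (2 * M).

Definition residual (tp : nat -> R) (N M : nat) (z : Z -> C) (y : nat -> C) : R :=
  sqrt (Rsum (fun n => (Cmod (Cminus (UPM tp N M z n) (y n)))^2) N).

(* Main.v *)
Require Import Defs.
From Stdlib Require Import Reals ZArith Lra Lia Psatz ClassicalEpsilon FunctionalExtensionality.
From Coquelicot Require Import Coquelicot.
Open Scope R_scope.


Lemma Rsum_ext f g n : (forall k, (k < n)%nat -> f k = g k) -> Rsum f n = Rsum g n.
Proof. induction n; simpl; intros H; auto. rewrite IHn, H; auto. Qed.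

Lemma Rsum_plus f g n : Rsum (fun k => f k + g k) n = Rsum f n + Rsum g n.
Proof. induction n; simpl; [lra|]. rewrite IHn; lra. Qed.

Lemma Rsum_scal c f n : Rsum (fun k => c * f k) n = c * Rsum f n.
Proof. induction n; simpl; [lra|]. rewrite IHn; lra. Qed.

Lemma Rsum_opp f n : Rsum (fun k => - f k) n = - Rsum f n.
Proof. induction n; simpl; [lra|]. rewrite IHn; lra. Qed.

Lemma Rsum_le f g n : (forall k, (k < n)%nat -> f k <= g k) -> Rsum f n <= Rsum g n.
Proof. induction n; simpl; intros H; [lra|]. specialize (IHn (fun k Hk => H k ltac:(lia))).
  specialize (H n ltac:(lia)); lra. Qed.

Lemma Rsum_nonneg f n : (forall k, (k < n)%nat -> 0 <= f k) -> 0 <= Rsum f n.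
Proof. induction n; simpl; intros H; [lra|].
  assert (0 <= Rsum f n) by (apply IHn; intros; apply H; lia). specialize (H n ltac:(lia)); lra. Qed.

Lemma Rsum_zero f n : (forall k, (k < n)%nat -> f k = 0) -> Rsum f n = 0.
Proof. induction n; simpl; intros H; auto. rewrite IHn. rewrite (H n); try lia; lra. intros; apply H; lia. Qed.

Lemma Rsum_const c n : Rsum (fun _ => c) n = INR n * c.
Proof. induction n; simpl Rsum; [simpl; lra|]. rewrite IHn, S_INR; lra. Qed.

Lemma Rsum_swap (F : nat -> nat -> R) n m :
  Rsum (fun i => Rsum (fun j => F i j) m) n = Rsum (fun j => Rsum (fun i => F i j) n) m.
Proof. induction n; simpl. rewrite Rsum_zero; auto.
  rewrite IHn. rewrite <- Rsum_plus. auto. Qed.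

Lemma Rsum_split f a b : Rsum f (a + b) = Rsum f a + Rsum (fun k => f (a + k)%nat) b.
Proof. induction b; simpl. rewrite Nat.add_0_r; lra.
  rewrite Nat.add_succ_r; simpl; rewrite IHb; lra. Qed.

Lemma Rsum_rev f n : Rsum (fun k => f (n - 1 - k)%nat) n = Rsum f n.
Proof. induction n; auto.
  change (S n) with (1 + n)%nat at 2. rewrite Rsum_split. simpl Rsum at 1.
  rewrite (Rsum_ext (fun k => f (S n - 1 - (1 + k))%nat) (fun k => f (n - 1 - k)%nat)).
  rewrite IHn. simpl. replace (n - 0 - 0)%nat with n by lia. lra. intros; f_equal; lia. Qed.

Lemma Rsum_pair f m : Rsum (fun i => f (2*i)%nat + f (2*i+1)%nat) m = Rsum f (2*m).
Proof. induction m; auto. change (Rsum (fun i : nat => f (2 * i)%nat + f (2 * i + 1)%nat) (S m))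
  with (Rsum (fun i : nat => f (2 * i)%nat + f (2 * i + 1)%nat) m + (f (2 * m)%nat + f (2 * m + 1)%nat)).
  rewrite IHm.
  replace (2 * S m)%nat with (S (S (2*m))) by lia.
  change (Rsum f (S (S (2*m)))) with (Rsum f (2*m) + f (2*m)%nat + f (S (2*m))).
  replace (2*m+1)%nat with (S (2*m)) by lia. lra. Qed.

Lemma Rsum_term_le f n m : (forall k, (k < n)%nat -> 0 <= f k) -> (m < n)%nat -> f m <= Rsum f n.
Proof. induction n; intros H Hm; [lia|]. simpl.
  assert (0 <= Rsum f n) by (apply Rsum_nonneg; intros; apply H; lia).
  destruct (Nat.eq_dec m n). subst; lra.
  assert (f m <= Rsum f n) by (apply IHn; [intros; apply H|]; lia).
  specialize (H n ltac:(lia)). lra. Qed.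

Lemma Csum_ext f g n : (forall k, (k < n)%nat -> f k = g k) -> Csum f n = Csum g n.
Proof. induction n; simpl; intros H; auto. rewrite IHn, H; auto. Qed.

Lemma Csum_plus f g n : Csum (fun k => Cplus (f k) (g k)) n = Cplus (Csum f n) (Csum g n).
Proof. induction n; simpl. apply injective_projections; simpl; lra.
  rewrite IHn. ring. Qed.

Lemma Csum_scal c f n : Csum (fun k => Cmult c (f k)) n = Cmult c (Csum f n).
Proof. induction n; simpl. apply injective_projections; simpl; lra.
  rewrite IHn. ring. Qed.

Lemma Csum_swap (F : nat -> nat -> C) n m :
  Csum (fun i => Csum (fun j => F i j) m) n = Csum (fun j => Csum (fun i => F i j) n) m.
Proof. induction n; simpl.
  induction m; simpl; auto. rewrite <- IHm. apply injective_projections; simpl; lra.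
  rewrite IHn. rewrite <- Csum_plus. auto. Qed.

Lemma Csum_re f n : fst (Csum f n) = Rsum (fun k => fst (f k)) n.
Proof. induction n; simpl; auto. rewrite IHn; auto. Qed.
Lemma Csum_im f n : snd (Csum f n) = Rsum (fun k => snd (f k)) n.
Proof. induction n; simpl; auto. rewrite IHn; auto. Qed.

Lemma Cmod_Csum_le f n : Cmod (Csum f n) <= Rsum (fun k => Cmod (f k)) n.
Proof. induction n; simpl. rewrite Cmod_0; lra.
  eapply Rle_trans. apply Cmod_triangle. lra. Qed.

Lemma Csum_conj f n : Cconj (Csum f n) = Csum (fun k => Cconj (f k)) n.
Proof. induction n; simpl. apply injective_projections; simpl; lra.
  rewrite Cplus_conj, IHn; auto. Qed.

Lemma Csum_minus f g n : Csum (fun k => Cminus (f k) (g k)) n = Cminus (Csum f n) (Csum g n).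
Proof. induction n; simpl. apply injective_projections; simpl; lra.
  rewrite IHn. ring. Qed.

Lemma Csum_zero f n : (forall k, (k < n)%nat -> f k = RtoC 0) -> Csum f n = RtoC 0.
Proof. induction n; simpl; intros H; auto. rewrite IHn, H; try (intros; apply H; lia); auto.
  apply injective_projections; simpl; lra. Qed.

Lemma Csum_split f a b : Csum f (a + b) = Cplus (Csum f a) (Csum (fun k => f (a + k)%nat) b).
Proof. induction b; simpl. rewrite Nat.add_0_r. apply injective_projections; simpl; lra.
  rewrite Nat.add_succ_r; simpl; rewrite IHb. ring. Qed.

Lemma Csum_rev f n : Csum (fun k => f (n - 1 - k)%nat) n = Csum f n.
Proof. apply injective_projections; rewrite ?Csum_re, ?Csum_im.
  apply (Rsum_rev (fun k => fst (f k))). apply (Rsum_rev (fun k => snd (f k))). Qed.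


Definition TP (a : nat -> C) (g : nat -> Z) (K : nat) (t : R) : C :=
  Csum (fun k => Cmult (a k) (phi (g k) t)) K.

Lemma is_RInt_plus' f g a b If Ig : is_RInt f a b If -> is_RInt g a b Ig ->
  is_RInt (fun x => f x + g x) a b (If + Ig).
Proof. intros. exact (is_RInt_plus f g a b If Ig H H0). Qed.
Lemma is_RInt_scal' f a b c If : is_RInt f a b If ->
  is_RInt (fun x => c * f x) a b (c * If).
Proof. intros. exact (is_RInt_scal f a b c If H). Qed.
Lemma is_RInt_const' a b c : is_RInt (fun _ => c) a b ((b - a) * c).
Proof. exact (is_RInt_const a b c). Qed.
Lemma is_RInt_minus' f g a b If Ig : is_RInt f a b If -> is_RInt g a b Ig ->
  is_RInt (fun x => f x - g x) a b (If - Ig).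
Proof. intros. apply (is_RInt_ext (fun x => f x + (-1) * g x)). intros; lra.
  replace (If - Ig) with (If + (-1) * Ig) by lra. apply is_RInt_plus'; auto. apply is_RInt_scal'; auto. Qed.

Lemma is_RInt_Rsum (F : nat -> R -> R) (v : nat -> R) a b n :
  (forall k, (k < n)%nat -> is_RInt (F k) a b (v k)) ->
  is_RInt (fun t => Rsum (fun k => F k t) n) a b (Rsum v n).
Proof. induction n; intros H; simpl.
  pose proof (is_RInt_const' a b 0) as H0; rewrite Rmult_0_r in H0; exact H0.
  apply is_RInt_plus'. apply IHn; intros; apply H; lia. apply H; lia. Qed.

Lemma is_RInt_cos_int (d : Z) :
  is_RInt (fun t => cos (IZR d * PI * t)) (-1) 1 (if Z.eq_dec d 0 then 2 else 0).
Proof. destruct (Z.eq_dec d 0) as [->|Hd].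
  - apply (is_RInt_ext (fun _ => 1)). intros; rewrite Rmult_0_l, Rmult_0_l, cos_0; auto.
    replace 2 with ((1 - -1) * 1) by lra. apply is_RInt_const'.
  - assert (HdP : IZR d * PI <> 0). { apply Rmult_integral_contrapositive; split.
      apply not_0_IZR; auto. apply PI_neq0. }
    set (F := fun t => sin (IZR d * PI * t) / (IZR d * PI)).
    assert (Hi : is_RInt (fun t => cos (IZR d * PI * t)) (-1) 1 (minus (F 1) (F (-1)))).
    apply (is_RInt_derive F).
    + intros ? ?. unfold F. auto_derive; repeat split; try apply PI_neq0; try (apply not_0_IZR; auto); try (field; split; [apply PI_neq0|apply not_0_IZR; auto]).
    + intros ? ?. apply (ex_derive_continuous (fun t => cos (IZR d * PI * t))). auto_derive; auto.
    + replace 0 with (minus (F 1) (F (-1))); auto. unfold F, minus, plus, opp; simpl.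
      rewrite Rmult_1_r. rewrite (sin_eq_0_1 (IZR d * PI)) by (exists d; auto).
      rewrite (sin_eq_0_1 (IZR d * PI * -1)) by (exists (-d)%Z; rewrite opp_IZR; ring).
      unfold Rdiv; ring.
Qed.

Lemma is_RInt_sin_int (d : Z) :
  is_RInt (fun t => sin (IZR d * PI * t)) (-1) 1 0.
Proof. destruct (Z.eq_dec d 0) as [->|Hd].
  - apply (is_RInt_ext (fun _ => 0)). intros; rewrite Rmult_0_l, Rmult_0_l, sin_0; auto.
    pose proof (is_RInt_const' (-1) 1 0) as H0; rewrite Rmult_0_r in H0; exact H0.
  - assert (HdP : IZR d * PI <> 0). { apply Rmult_integral_contrapositive; split.
      apply not_0_IZR; auto. apply PI_neq0. }
    set (F := fun t => - cos (IZR d * PI * t) / (IZR d * PI)).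
    assert (Hi : is_RInt (fun t => sin (IZR d * PI * t)) (-1) 1 (minus (F 1) (F (-1)))).
    apply (is_RInt_derive F).
    + intros ? ?. unfold F. auto_derive; repeat split; try apply PI_neq0; try (apply not_0_IZR; auto); try (field; split; [apply PI_neq0|apply not_0_IZR; auto]).
    + intros ? ?. apply (ex_derive_continuous (fun t => sin (IZR d * PI * t))). auto_derive; auto.
    + replace 0 with (minus (F 1) (F (-1))); auto. unfold F, minus, plus, opp; simpl.
      replace (IZR d * PI * -1) with (- (IZR d * PI * 1)) by ring. rewrite cos_neg.
      unfold Rdiv; ring.
Qed.

Lemma Csum_mult f g n m :
  Cmult (Csum f n) (Csum g m) = Csum (fun i => Csum (fun j => Cmult (f i) (g j)) m) n.
Proof. induction n; simpl.
  - apply injective_projections; simpl; lra.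
  - rewrite <- IHn. rewrite Csum_scal. ring. Qed.

Lemma Cmod2_fst (c : C) : Cmod c ^ 2 = fst (Cmult c (Cconj c)).
Proof. rewrite Cmod2_alt. destruct c; simpl. unfold Re, Im; simpl. ring. Qed.

Lemma TP_norm2_pt a g K t :
  Cmod (TP a g K t) ^ 2 =
  Rsum (fun k => Rsum (fun l =>
     fst (Cmult (a k) (Cconj (a l))) * cos (IZR (g k - g l) * PI * t)
   - snd (Cmult (a k) (Cconj (a l))) * sin (IZR (g k - g l) * PI * t)) K) K.
Proof. rewrite Cmod2_fst. unfold TP. rewrite Csum_conj, Csum_mult, Csum_re.
  apply Rsum_ext; intros k _. rewrite Csum_re. apply Rsum_ext; intros l _.
  rewrite minus_IZR. replace ((IZR (g k) - IZR (g l)) * PI * t) with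
    (IZR (g k) * PI * t - IZR (g l) * PI * t) by ring.
  rewrite cos_minus, sin_minus. destruct (a k) as [u v], (a l) as [u' v'].
  unfold phi; simpl. ring. Qed.

Lemma Rsum_kron n k c : (k < n)%nat -> Rsum (fun l => if Nat.eq_dec l k then c else 0) n = c.
Proof. induction n; intros H; [lia|]. simpl. destruct (Nat.eq_dec n k).
  subst. rewrite Rsum_zero. lra. intros; destruct (Nat.eq_dec k0 k); auto; lia.
  rewrite IHn; [lra|lia]. Qed.

Lemma TP_norm2 a g K :
  (forall k l, (k < K)%nat -> (l < K)%nat -> g k = g l -> k = l) ->
  is_RInt (fun t => Cmod (TP a g K t) ^ 2) (-1) 1 (2 * Rsum (fun k => Cmod (a k) ^ 2) K).
Proof. intros Hinj. eapply is_RInt_ext. intros; symmetry; apply TP_norm2_pt.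
  replace (2 * Rsum (fun k => Cmod (a k) ^ 2) K) with
   (Rsum (fun k => Rsum (fun l => fst (Cmult (a k) (Cconj (a l))) *
        (if Z.eq_dec (g k - g l) 0 then 2 else 0) - snd (Cmult (a k) (Cconj (a l))) * 0) K) K).
  - apply is_RInt_Rsum; intros k Hk. apply is_RInt_Rsum; intros l Hl.
    apply is_RInt_minus'; apply is_RInt_scal'. apply is_RInt_cos_int. apply is_RInt_sin_int.
  - rewrite <- Rsum_scal. apply Rsum_ext; intros k Hk.
    rewrite (Rsum_ext _ (fun l => if Nat.eq_dec l k then 2 * Cmod (a k) ^ 2 else 0)).
    apply Rsum_kron; auto.
    intros l Hl. destruct (Nat.eq_dec l k).
    + subst. destruct (Z.eq_dec (g k - g k) 0); [|lia]. rewrite Cmod2_fst. ring.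
    + destruct (Z.eq_dec (g k - g l) 0). exfalso; apply n; symmetry; apply Hinj; auto; lia. ring.
Qed.


Fixpoint lb (tp : nat -> R) (n k : nat) : R :=
  match k with O => -1
  | S k' => if Rlt_dec (tp k') (tp n) then Rmax (lb tp n k') ((tp k' + tp n)/2) else lb tp n k' end.
Fixpoint ub (tp : nat -> R) (n k : nat) : R :=
  match k with O => 1
  | S k' => if Rlt_dec (tp n) (tp k') then Rmin (ub tp n k') ((tp k' + tp n)/2) else ub tp n k' end.

Lemma dist_mid_l a b t : a < b -> (Rabs (t - b) <= Rabs (t - a) <-> (a + b)/2 <= t).
Proof. intros H. unfold Rabs; destruct (Rcase_abs (t - b)), (Rcase_abs (t - a)); split; intro; lra. Qed.
Lemma dist_mid_r a b t : b < a -> (Rabs (t - b) <= Rabs (t - a) <-> t <= (a + b)/2).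
Proof. intros H. unfold Rabs; destruct (Rcase_abs (t - b)), (Rcase_abs (t - a)); split; intro; lra. Qed.

Lemma lb_spec tp n k t : lb tp n k <= t <->
  (-1 <= t /\ forall m, (m < k)%nat -> tp m < tp n -> (tp m + tp n)/2 <= t).
Proof. induction k; simpl.
  - split. intros; split; auto; intros; lia. tauto.
  - destruct (Rlt_dec (tp k) (tp n)).
    + unfold Rmax; destruct (Rle_dec (lb tp n k) ((tp k + tp n) / 2)); split; intros H.
      * assert (lb tp n k <= t) by lra. apply IHk in H0. destruct H0; split; auto.
        intros m Hm Hlt. destruct (Nat.eq_dec m k). subst; lra. apply H1; auto; lia.
      * destruct H. apply H0; auto.
      * assert (H0 := H). apply IHk in H0. destruct H0; split; auto.
        intros m Hm Hlt. destruct (Nat.eq_dec m k). subst; lra. apply H1; auto; lia.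
      * apply IHk. destruct H; split; auto.
    + rewrite IHk. split; intros [H1 H2]; split; auto.
      intros m Hm Hlt. destruct (Nat.eq_dec m k). subst; lra. apply H2; auto; lia.
Qed.

Lemma ub_spec tp n k t : t <= ub tp n k <->
  (t <= 1 /\ forall m, (m < k)%nat -> tp n < tp m -> t <= (tp m + tp n)/2).
Proof. induction k; simpl.
  - split. intros; split; auto; intros; lia. tauto.
  - destruct (Rlt_dec (tp n) (tp k)).
    + unfold Rmin; destruct (Rle_dec (ub tp n k) ((tp k + tp n) / 2)); split; intros H.
      * assert (H0 := H). apply IHk in H0. destruct H0; split; auto.
        intros m Hm Hlt. destruct (Nat.eq_dec m k). subst; lra. apply H1; auto; lia.
      * apply IHk. destruct H; split; auto.
      * assert (t <= ub tp n k) by lra. apply IHk in H0. destruct H0; split; auto.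
        intros m Hm Hlt. destruct (Nat.eq_dec m k). subst; lra. apply H1; auto; lia.
      * destruct H. apply H0; auto.
    + rewrite IHk. split; intros [H1 H2]; split; auto.
      intros m Hm Hlt. destruct (Nat.eq_dec m k). subst; lra. apply H2; auto; lia.
Qed.

Section Vor.
Variables (tp : nat -> R) (N : nat).
Hypothesis Hrange : forall n, (n < N)%nat -> -1 <= tp n <= 1.
Hypothesis Hinj : forall n m, (n < N)%nat -> (m < N)%nat -> tp n = tp m -> n = m.

Lemma vor_iff n t : (n < N)%nat ->
  (voronoi tp N n t <-> (-1 < t < 1 /\ lb tp n N <= t <= ub tp n N)).
Proof. intros Hn. unfold voronoi. split.
  - intros [Ht H]. split; auto. split.
    + apply lb_spec. split; [lra|]. intros m Hm Hlt. apply (dist_mid_l (tp m) (tp n) t Hlt).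
      apply H; auto. intro; subst; lra.
    + apply ub_spec. split; [lra|]. intros m Hm Hlt. apply (dist_mid_r (tp m) (tp n) t Hlt).
      apply H; auto. intro; subst; lra.
  - intros [Ht [H1 H2]]. split; auto. intros m Hm Hmn.
    apply lb_spec in H1; apply ub_spec in H2.
    destruct (Rtotal_order (tp m) (tp n)) as [Hl|[He|Hg]].
    + apply (dist_mid_l (tp m) (tp n) t Hl). apply H1; auto.
    + exfalso; apply Hmn; apply Hinj; auto.
    + apply (dist_mid_r (tp m) (tp n) t Hg). apply H2; auto.
Qed.

Lemma lb_bounds n k : (n < N)%nat -> -1 <= lb tp n k <= tp n.
Proof. intros Hn. induction k; simpl. specialize (Hrange n Hn); lra.
  destruct (Rlt_dec (tp k) (tp n)); auto.
  unfold Rmax; destruct (Rle_dec (lb tp n k) ((tp k + tp n) / 2)); lra. Qed.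
Lemma ub_bounds n k : (n < N)%nat -> tp n <= ub tp n k <= 1.
Proof. intros Hn. induction k; simpl. specialize (Hrange n Hn); lra.
  destruct (Rlt_dec (tp n) (tp k)); auto.
  unfold Rmin; destruct (Rle_dec (ub tp n k) ((tp k + tp n) / 2)); lra. Qed.

Lemma lb_mid n m k : (m < k)%nat -> tp m < tp n -> (tp m + tp n)/2 <= lb tp n k.
Proof. induction k; intros Hm Hlt; [lia|]. simpl.
  destruct (Nat.eq_dec m k).
  - subst k. destruct (Rlt_dec (tp m) (tp n)); [|lra]. apply Rmax_r.
  - destruct (Rlt_dec (tp k) (tp n)). eapply Rle_trans; [|apply Rmax_l]. apply IHk; auto; lia.
    apply IHk; auto; lia. Qed.
Lemma ub_mid n m k : (m < k)%nat -> tp n < tp m -> ub tp n k <= (tp m + tp n)/2.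
Proof. induction k; intros Hm Hlt; [lia|]. simpl.
  destruct (Nat.eq_dec m k).
  - subst k. destruct (Rlt_dec (tp n) (tp m)); [|lra]. apply Rmin_r.
  - destruct (Rlt_dec (tp n) (tp k)). eapply Rle_trans; [apply Rmin_l|]. apply IHk; auto; lia.
    apply IHk; auto; lia. Qed.

End Vor.

Lemma is_RInt_interval (f : R -> R) a b : -1 <= a -> a <= b -> b <= 1 ->
  (forall t, -1 < t < a -> f t = 0) -> (forall t, a < t < b -> f t = 1) ->
  (forall t, b < t < 1 -> f t = 0) -> is_RInt f (-1) 1 (b - a).
Proof. intros H1 H2 H3 Ha Hab Hb.
  assert (I1 : is_RInt f (-1) a 0).
  { apply (is_RInt_ext (fun _ => 0)). intros x Hx. rewrite Rmin_left, Rmax_right in Hx by lra.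
    symmetry; apply Ha; lra.
    pose proof (is_RInt_const' (-1) a 0) as H0; rewrite Rmult_0_r in H0; exact H0. }
  assert (I2 : is_RInt f a b (b - a)).
  { apply (is_RInt_ext (fun _ => 1)). intros x Hx. rewrite Rmin_left, Rmax_right in Hx by lra.
    symmetry; apply Hab; lra.
    pose proof (is_RInt_const' a b 1) as H0; rewrite Rmult_1_r in H0; exact H0. }
  assert (I3 : is_RInt f b 1 0).
  { apply (is_RInt_ext (fun _ => 0)). intros x Hx. rewrite Rmin_left, Rmax_right in Hx by lra.
    symmetry; apply Hb; lra.
    pose proof (is_RInt_const' b 1 0) as H0; rewrite Rmult_0_r in H0; exact H0. }
  pose proof (is_RInt_Chasles f a b 1 _ _ I2 I3) as I23.
  pose proof (is_RInt_Chasles f (-1) a 1 _ _ I1 I23) as I.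
  replace (b - a) with (plus 0 (plus (b - a) 0)); auto.
  unfold plus; simpl; lra.
Qed.

Section Vor2.
Variables (tp : nat -> R) (N : nat).
Hypothesis Hrange : forall n, (n < N)%nat -> -1 <= tp n <= 1.
Hypothesis Hinj : forall n m, (n < N)%nat -> (m < N)%nat -> tp n = tp m -> n = m.

Lemma is_RInt_vor n : (n < N)%nat ->
  is_RInt (indicator (voronoi tp N n)) (-1) 1 (ub tp n N - lb tp n N).
Proof. intros Hn. pose proof (lb_bounds tp N Hrange n N Hn). pose proof (ub_bounds tp N Hrange n N Hn).
  apply is_RInt_interval; try lra; intros t Ht; unfold indicator;
  destruct (excluded_middle_informative (voronoi tp N n t)) as [V|V]; auto;
  try (apply (vor_iff tp N Hinj n t Hn) in V; lra).
  exfalso; apply V. apply (vor_iff tp N Hinj n t Hn). lra.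
Qed.

Lemma tau_eq n : (n < N)%nat -> tau tp N n = (ub tp n N - lb tp n N) / 2.
Proof. intros Hn. unfold tau. apply is_RInt_unique.
  replace ((ub tp n N - lb tp n N) / 2) with (/2 * (ub tp n N - lb tp n N)) by lra.
  apply is_RInt_scal'. apply is_RInt_vor; auto. Qed.

Lemma tau_nonneg n : (n < N)%nat -> 0 <= tau tp N n.
Proof. intros Hn. rewrite tau_eq; auto.
  pose proof (lb_bounds tp N Hrange n N Hn). pose proof (ub_bounds tp N Hrange n N Hn). lra. Qed.

Definition ind_open n t := if Rlt_dec (lb tp n N) t then if Rlt_dec t (ub tp n N) then 1 else 0 else 0.

Lemma ind_open_01 n t : ind_open n t = 0 \/ ind_open n t = 1.
Proof. unfold ind_open; destruct Rlt_dec; [destruct Rlt_dec|]; auto. Qed.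

Lemma ind_open_disj n m t : (n < N)%nat -> (m < N)%nat -> n <> m ->
  ind_open n t = 1 -> ind_open m t = 1 -> False.
Proof. unfold ind_open; intros Hn Hm Hnm.
  destruct (Rlt_dec (lb tp n N) t); [destruct (Rlt_dec t (ub tp n N))|]; try lra; intros _;
  destruct (Rlt_dec (lb tp m N) t); [destruct (Rlt_dec t (ub tp m N))|]; try lra; intros _.
  destruct (Rtotal_order (tp m) (tp n)) as [Hl|[He|Hg]].
  - pose proof (lb_mid tp n m N Hm Hl). pose proof (ub_mid tp m n N Hn Hl). lra.
  - apply Hnm; apply Hinj; auto.
  - pose proof (lb_mid tp m n N Hn Hg). pose proof (ub_mid tp n m N Hm Hg). lra.
Qed.

Lemma ind_sum_le t k : (k <= N)%nat -> Rsum (fun n => ind_open n t) k <= 1.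
Proof. induction k; intros Hk; simpl; [lra|].
  destruct (ind_open_01 k t) as [H|H]; rewrite H.
  - specialize (IHk ltac:(lia)); lra.
  - rewrite Rsum_zero. lra. intros m Hm. destruct (ind_open_01 m t); auto.
    exfalso; apply (ind_open_disj k m t); auto; lia.
Qed.

Lemma sum_len : Rsum (fun n => ub tp n N - lb tp n N) N <= 2.
Proof.
  assert (I : is_RInt (fun t => Rsum (fun n => ind_open n t) N) (-1) 1
                      (Rsum (fun n => ub tp n N - lb tp n N) N)).
  { apply is_RInt_Rsum. intros n Hn.
    pose proof (lb_bounds tp N Hrange n N Hn). pose proof (ub_bounds tp N Hrange n N Hn).
    apply is_RInt_interval; try lra; intros t Ht; unfold ind_open;
    repeat destruct Rlt_dec; lra. }
  rewrite <- (is_RInt_unique _ _ _ _ I).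
  replace 2 with (RInt (fun _ => 1) (-1) 1).
  apply RInt_le. lra. eexists; eauto. eexists; apply is_RInt_const'.
  intros t Ht. apply ind_sum_le; lia.
  apply is_RInt_unique. replace 2 with ((1 - -1) * 1) by lra. apply is_RInt_const'.
Qed.

Lemma sum_tau_le : Rsum (fun n => tau tp N n) N <= 1.
Proof. rewrite (Rsum_ext _ (fun n => /2 * (ub tp n N - lb tp n N))).
  rewrite Rsum_scal. pose proof sum_len. lra.
  intros; rewrite tau_eq; auto; lra. Qed.

End Vor2.

Lemma mindist_arg tp t k : exists i, (i = 0 \/ 2 <= i <= S k)%nat /\ mindist tp t k = Rabs (t - tp i).
Proof. induction k.
  - exists 0%nat; simpl; auto.
  - destruct IHk as [n [Hn Heq]]. simpl. unfold Rmin.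
    destruct (Rle_dec (mindist tp t k) (Rabs (t - tp (S (S k))))).
    + exists n; split; auto; lia.
    + exists (S (S k)); split; auto; lia.
Qed.

Lemma argmin_exists (F : nat -> R) N : (0 < N)%nat ->
  exists n, (n < N)%nat /\ forall m, (m < N)%nat -> F n <= F m.
Proof. induction N; intros H; [lia|]. destruct (Nat.eq_dec N 0).
  - subst; exists 0%nat; split; auto; intros m Hm; replace m with 0%nat by lia; lra.
  - destruct IHN as [n0 [Hn Hle]]; [lia|].
    destruct (Rle_dec (F n0) (F N)).
    + exists n0; split; [lia|]. intros m Hm; destruct (Nat.eq_dec m N); [subst; auto|apply Hle; lia].
    + exists N; split; [lia|]. intros m Hm; destruct (Nat.eq_dec m N); [subst; lra|].
      specialize (Hle m ltac:(lia)); lra.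
Qed.

Lemma mindist_le tp N t h0 : Rbar_le (density tp N) (Finite h0) -> -1 < t < 1 ->
  mindist tp t (N - 1) <= h0.
Proof. intros Hd Ht.
  destruct (Lub_Rbar_correct (fun r => exists t, -1 < t < 1 /\ r = mindist tp t (N - 1))) as [Hub _].
  assert (H : Rbar_le (mindist tp t (N - 1)) (density tp N)) by (apply Hub; exists t; split; auto).
  exact (Rbar_le_trans _ _ _ H Hd).
Qed.

Lemma nearest tp N t h0 : (0 < N)%nat -> 0 < h0 < 1/3 -> Rbar_le (density tp N) (Finite h0) ->
  -1 < t < 1 -> exists n, (n < N)%nat /\ voronoi tp N n t /\ Rabs (t - tp n) <= 4 * h0.
Proof. intros HN Hh Hd Ht.
  assert (Hq : exists q, (q < N)%nat /\ Rabs (t - tp q) <= 4 * h0).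
  { destruct (mindist_arg tp t (N - 1)) as [i [Hi Heq]].
    pose proof (mindist_le tp N t h0 Hd Ht) as Hm.
    destruct (Nat.lt_ge_cases i N).
    - exists i; split; auto. lra.
    - assert (i = N) by lia. subst i.
      set (u := if Rlt_dec (t + 3 * h0) 1 then t + 3 * h0 else t - 3 * h0).
      assert (Hu : -1 < u < 1 /\ Rabs (u - t) = 3 * h0).
      { unfold u; destruct Rlt_dec; split; try (unfold Rabs; destruct Rcase_abs); lra. }
      destruct (mindist_arg tp u (N - 1)) as [i [Hi' Heq']].
      pose proof (mindist_le tp N u h0 Hd (proj1 Hu)) as Hm'.
      destruct (Nat.lt_ge_cases i N).
      + exists i; split; auto.
        assert (Rabs (t - tp i) <= Rabs (t - u) + Rabs (u - tp i)).
        { replace (t - tp i) with ((t - u) + (u - tp i)) by ring. apply Rabs_triang. }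
        rewrite Rabs_minus_sym in Hu. lra.
      + exfalso. assert (i = N) by lia. subst i.
        assert (Rabs (u - t) <= Rabs (u - tp N) + Rabs (tp N - t)).
        { replace (u - t) with ((u - tp N) + (tp N - t)) by ring. apply Rabs_triang. }
        rewrite (Rabs_minus_sym (tp N)) in H1. lra. }
  destruct Hq as [q [Hq Hqle]].
  destruct (argmin_exists (fun m => Rabs (t - tp m)) N HN) as [n [Hn Hle]].
  exists n; split; auto; split.
  - unfold voronoi; split; [auto|]. intros m Hm _. apply Hle; auto.
  - specialize (Hle q Hq). simpl in Hle. lra.
Qed.


Lemma sumf_Rsum f n : sum_f_R0 f n = Rsum f (S n).
Proof. induction n; simpl; auto. lra. rewrite IHn; simpl; auto. Qed.

Lemma half_pow_le n m : (n <= m)%nat -> (1/2)^m <= (1/2)^n.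
Proof. intros H. replace m with (n + (m - n))%nat by lia. rewrite pow_add.
  assert (0 < (1/2)^n) by (apply pow_lt; lra).
  assert ((1/2)^(m-n) <= 1). { pose proof (pow_incr (1/2) 1 (m-n) ltac:(lra)) as H1; rewrite pow1 in H1; auto. }
  nra. Qed.

Lemma fact_ge1 n : 1 <= INR (Factorial.fact n).
Proof. replace 1 with (INR 1) by auto. apply le_INR. pose proof (Factorial.lt_O_fact n). lia. Qed.

Lemma abs_pow_fact_le x k : Rabs x <= 1/2 -> Rabs (x ^ k / INR (Factorial.fact k)) <= (1/2)^k.
Proof. intros H. pose proof (fact_ge1 k).
  unfold Rdiv. rewrite Rabs_mult, Rabs_inv, <- RPow_abs, (Rabs_right (INR _)) by lra.
  assert (Rabs x ^ k <= (1/2)^k) by (apply pow_incr; split; [apply Rabs_pos|auto]).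
  assert (0 <= Rabs x ^ k) by (apply pow_le; apply Rabs_pos).
  assert (0 < / INR (Factorial.fact k) <= 1).
  { split. apply Rinv_0_lt_compat; lra. rewrite <- Rinv_1. apply Rinv_le_contravar; lra. }
  nra. Qed.

Lemma PI_gt3 : 3 < PI.
Proof. pose proof PI2_3_2. lra. Qed.

Lemma cos_rem x n0 : Rabs x <= 1/2 -> Rabs (cos x - cos_approx x (2*n0+1)) <= (1/2)^n0.
Proof. intros H. pose proof PI_gt3.
  assert (Hx : - PI / 2 <= x <= PI / 2) by (unfold Rabs in H; destruct Rcase_abs; lra).
  destruct (cos_bound x n0) as [H1 H2]; try lra.
  replace (2 * (n0 + 1))%nat with (S (2*n0+1)) in H2 by lia.
  unfold cos_approx in *. rewrite tech5 in H2.
  assert (Rabs (cos_term x (S (2 * n0 + 1))) <= (1/2)^n0).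
  { unfold cos_term. rewrite Rabs_mult, pow_1_abs, Rmult_1_l.
    eapply Rle_trans. apply abs_pow_fact_le; auto. apply half_pow_le; lia. }
  unfold Rabs at 1; destruct Rcase_abs.
  - lra.
  - assert (cos_term x (S (2 * n0 + 1)) <= Rabs (cos_term x (S (2 * n0 + 1)))) by apply Rle_abs. lra.
Qed.

Lemma sin_term_opp x i : sin_term (-x) i = - sin_term x i.
Proof. unfold sin_term. replace (2*i+1)%nat with (S (2*i)) by lia.
  replace ((-x) ^ S (2*i)) with (- x ^ S (2*i)). field.
  2: { rewrite <- !tech_pow_Rmult, !pow_mult. replace ((-x)^2) with (x^2) by ring. ring. }
  apply not_0_INR. apply Factorial.fact_neq_0. Qed.

Lemma sin_approx_opp x n : sin_approx (-x) n = - sin_approx x n.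
Proof. unfold sin_approx. induction n; simpl. apply sin_term_opp. rewrite IHn, sin_term_opp. lra. Qed.

Lemma sin_rem_pos x n0 : 0 <= x <= 1/2 -> Rabs (sin x - sin_approx x (2*n0+1)) <= (1/2)^n0.
Proof. intros H. pose proof PI_gt3.
  destruct (sin_bound x n0) as [H1 H2]; try lra.
  replace (2 * (n0 + 1))%nat with (S (2*n0+1)) in H2 by lia.
  unfold sin_approx in *. rewrite tech5 in H2.
  assert (Rabs (sin_term x (S (2 * n0 + 1))) <= (1/2)^n0).
  { unfold sin_term. rewrite Rabs_mult, pow_1_abs, Rmult_1_l.
    eapply Rle_trans. apply abs_pow_fact_le; rewrite Rabs_right; lra. apply half_pow_le; lia. }
  unfold Rabs at 1; destruct Rcase_abs.
  - lra.
  - assert (sin_term x (S (2 * n0 + 1)) <= Rabs (sin_term x (S (2 * n0 + 1)))) by apply Rle_abs. lra.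
Qed.

Lemma sin_rem x n0 : Rabs x <= 1/2 -> Rabs (sin x - sin_approx x (2*n0+1)) <= (1/2)^n0.
Proof. intros H. destruct (Rle_dec 0 x).
  - apply sin_rem_pos. rewrite Rabs_right in H; lra.
  - rewrite Rabs_left in H by lra.
    replace (sin x - sin_approx x (2 * n0 + 1)) with (- (sin (-x) - sin_approx (-x) (2*n0+1))).
    rewrite Rabs_Ropp. apply sin_rem_pos; lra.
    rewrite sin_neg, sin_approx_opp. ring.
Qed.


Definition Gf (g : nat -> Z) l := IZR (g l) * PI.
Definition Ak a g K (k : nat) t := TP (fun l => Cmult (a l) (RtoC (Gf g l ^ k))) g K t.

Ltac cpair := apply injective_projections; simpl; ring.

Lemma Cmod_phi j t : Cmod (phi j t) = 1.
Proof. unfold Cmod, phi; simpl. pose proof (sin2_cos2 (IZR j * PI * t)) as H. unfold Rsqr in H.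
  replace (cos (IZR j * PI * t) * (cos (IZR j * PI * t) * 1) + sin (IZR j * PI * t) * (sin (IZR j * PI * t) * 1)) with 1 by lra.
  apply sqrt_1. Qed.

Lemma RtoC_Rsum f n : RtoC (Rsum f n) = Csum (fun k => RtoC (f k)) n.
Proof. induction n; simpl; auto. rewrite <- IHn. unfold RtoC; cpair. Qed.

Lemma exch a g K t (r : nat -> R) (e : nat -> nat) m :
  Csum (fun l => Cmult (Cmult (a l) (phi (g l) t)) (RtoC (Rsum (fun i => r i * Gf g l ^ (e i)) m))) K
  = Csum (fun i => Cmult (RtoC (r i)) (Ak a g K (e i) t)) m.
Proof.
  rewrite (Csum_ext _ (fun l => Csum (fun i => Cmult (Cmult (a l) (phi (g l) t)) (RtoC (r i * Gf g l ^ e i))) m)).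
  rewrite Csum_swap. apply Csum_ext; intros i _. unfold Ak, TP. rewrite <- Csum_scal.
  apply Csum_ext; intros l _. destruct (a l), (phi (g l) t). unfold RtoC; cpair.
  intros l _. rewrite RtoC_Rsum, <- Csum_scal. auto.
Qed.

Lemma phi_shift j t s : phi j (t + s) = Cmult (phi j t) (cos (IZR j*PI*s), sin (IZR j*PI*s)).
Proof. unfold phi. replace (IZR j * PI * (t + s)) with (IZR j * PI * t + IZR j * PI * s) by ring.
  rewrite cos_plus, sin_plus. cpair. Qed.

Lemma Rsum_drop0 f n : (0 < n)%nat -> Rsum (fun i => if Nat.eq_dec i 0 then 0 else f i) n = Rsum f n - f 0%nat.
Proof. induction n; intros H; [lia|]. destruct (Nat.eq_dec n 0).
  - subst; simpl; destruct (Nat.eq_dec 0 0); [lra|congruence].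
  - simpl. rewrite IHn by lia. destruct (Nat.eq_dec n 0); [lia|lra]. Qed.

Lemma cos_approx_eq x G s n0 : x = G * s ->
  cos_approx x (2*n0+1) - 1 = Rsum (fun i => (if Nat.eq_dec i 0 then 0 else (-1)^i * (s^(2*i) / INR (Factorial.fact (2*i)))) * G ^ (2*i)) (S (2*n0+1)).
Proof. intros ->. unfold cos_approx. rewrite sumf_Rsum.
  transitivity (Rsum (fun i => if Nat.eq_dec i 0 then 0 else cos_term (G*s) i) (S (2 * n0 + 1))).
  rewrite Rsum_drop0 by lia. assert (cos_term (G*s) 0 = 1) by (unfold cos_term; simpl; field). lra.
  apply Rsum_ext. intros i _. destruct (Nat.eq_dec i 0). ring. unfold cos_term. rewrite Rpow_mult_distr. field.
  apply not_0_INR. apply Factorial.fact_neq_0. Qed.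

Lemma sin_approx_eq x G s n0 : x = G * s ->
  sin_approx x (2*n0+1) = Rsum (fun i => ((-1)^i * (s^(2*i+1) / INR (Factorial.fact (2*i+1)))) * G ^ (2*i+1)) (S (2*n0+1)).
Proof. intros ->. unfold sin_approx. rewrite sumf_Rsum. apply Rsum_ext; intros i _.
  unfold sin_term. rewrite Rpow_mult_distr. field.
  apply not_0_INR. apply Factorial.fact_neq_0. Qed.

Lemma Cmod_Csum_scal_le (r : nat -> R) (A : nat -> C) (b : nat -> R) m :
  (forall i, (i < m)%nat -> Rabs (r i) * Cmod (A i) <= b i) ->
  Cmod (Csum (fun i => Cmult (RtoC (r i)) (A i)) m) <= Rsum b m.
Proof. intros H. eapply Rle_trans. apply Cmod_Csum_le. apply Rsum_le; intros i Hi.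
  rewrite Cmod_mult, Cmod_R. apply H; auto. Qed.

Lemma coef_bound s h j k : Rabs s <= h -> Rabs ((-1)^j * (s^k / INR (Factorial.fact k))) <= h^k.
Proof. intros H. rewrite Rabs_mult, pow_1_abs, Rmult_1_l. pose proof (fact_ge1 k).
  unfold Rdiv. rewrite Rabs_mult, Rabs_inv, <- RPow_abs, (Rabs_right (INR _)) by lra.
  assert (Rabs s ^ k <= h^k) by (apply pow_incr; split; [apply Rabs_pos|auto]).
  assert (0 <= Rabs s ^ k) by (apply pow_le; apply Rabs_pos).
  assert (0 < / INR (Factorial.fact k) <= 1).
  { split. apply Rinv_0_lt_compat; lra. rewrite <- Rinv_1. apply Rinv_le_contravar; lra. }
  nra. Qed.

Lemma taylor a g K t s h n0 : Rabs s <= h -> (forall l, (l < K)%nat -> Rabs (Gf g l * s) <= 1/2) ->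
  Cmod (Cminus (TP a g K (t + s)) (TP a g K t)) <=
  Rsum (fun k => if Nat.eq_dec k 0 then 0 else h^k * Cmod (Ak a g K k t)) (2 * S (2*n0+1))
  + 2 * (1/2)^n0 * Rsum (fun l => Cmod (a l)) K.
Proof. intros Hs Hx.
  set (rc := fun i => (if Nat.eq_dec i 0 then 0 else (-1)^i * (s^(2*i) / INR (Factorial.fact (2*i))))).
  set (rs := fun i => (-1)^i * (s^(2*i+1) / INR (Factorial.fact (2*i+1)))).
  set (x := fun l => Gf g l * s).
  set (w := fun l => Cmult (a l) (phi (g l) t)).
  set (mc := fun l => Rsum (fun i => rc i * Gf g l ^ (2*i)) (S (2*n0+1))).
  set (ms := fun l => Rsum (fun i => rs i * Gf g l ^ (2*i+1)) (S (2*n0+1))).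
  set (ec := fun l => cos (x l) - cos_approx (x l) (2*n0+1)).
  set (es := fun l => sin (x l) - sin_approx (x l) (2*n0+1)).
  assert (Hdec : Cminus (TP a g K (t + s)) (TP a g K t) =
     Cplus (Cplus (Csum (fun l => Cmult (w l) (RtoC (mc l))) K)
                  (Cmult Ci (Csum (fun l => Cmult (w l) (RtoC (ms l))) K)))
           (Cplus (Csum (fun l => Cmult (w l) (RtoC (ec l))) K)
                  (Cmult Ci (Csum (fun l => Cmult (w l) (RtoC (es l))) K)))).
  { unfold TP. rewrite <- Csum_minus, <- !Csum_scal, <- !Csum_plus. apply Csum_ext; intros l _.
    rewrite phi_shift. unfold mc, ms, rc, rs. rewrite <- (cos_approx_eq (x l) (Gf g l) s n0), <- (sin_approx_eq (x l) (Gf g l) s n0) by (unfold x; ring).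
    unfold w, ec, es, x, Gf. destruct (a l), (phi (g l) t). unfold RtoC, Ci; cpair. }
  rewrite Hdec. unfold w, mc, ms. rewrite !exch.
  assert (HCi : forall z, Cmod (Cmult Ci z) = Cmod z) by (intros; rewrite Cmod_mult, Cmod_Ci; ring).
  eapply Rle_trans. apply Cmod_triangle. apply Rplus_le_compat.
  - eapply Rle_trans. apply Cmod_triangle. rewrite HCi.
    rewrite <- Rsum_pair, Rsum_plus. apply Rplus_le_compat; apply Cmod_Csum_scal_le; intros i Hi.
    + unfold rc. destruct (Nat.eq_dec i 0); destruct (Nat.eq_dec (2*i) 0); try lia.
      rewrite Rabs_R0; lra. apply Rmult_le_compat_r. apply Cmod_ge_0. apply coef_bound; auto.
    + destruct (Nat.eq_dec (2*i+1) 0); [lia|]. apply Rmult_le_compat_r. apply Cmod_ge_0.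
      apply coef_bound; auto.
  - eapply Rle_trans. apply Cmod_triangle. rewrite HCi.
    replace (2 * (1/2)^n0 * Rsum (fun l => Cmod (a l)) K) with
      (Rsum (fun l => Cmod (a l) * (1/2)^n0) K + Rsum (fun l => Cmod (a l) * (1/2)^n0) K).
    2: { rewrite (Rsum_ext (fun l => Cmod (a l) * (1/2)^n0) (fun l => (1/2)^n0 * Cmod (a l))) by (intros; ring).
         rewrite Rsum_scal; ring. }
    apply Rplus_le_compat; eapply Rle_trans; try apply Cmod_Csum_le; apply Rsum_le; intros l Hl;
    rewrite !Cmod_mult, Cmod_phi, Cmod_R, Rmult_1_r; apply Rmult_le_compat_l; try apply Cmod_ge_0.
    + apply cos_rem. apply Hx; auto.
    + apply sin_rem. apply Hx; auto.
Qed.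


Lemma wCS (u lam : nat -> R) L : (forall k, (k < L)%nat -> 0 < lam k) ->
  (Rsum u L)^2 <= Rsum lam L * Rsum (fun k => u k ^ 2 / lam k) L.
Proof. induction L; intros Hl; cbn [Rsum]; [lra|].
  assert (HS : 0 <= Rsum lam L) by (apply Rsum_nonneg; intros; apply Rlt_le, Hl; lia).
  assert (HT : 0 <= Rsum (fun k => u k ^ 2 / lam k) L).
  { apply Rsum_nonneg; intros. apply Rmult_le_pos. apply pow2_ge_0.
    apply Rlt_le, Rinv_0_lt_compat, Hl; lia. }
  specialize (IHL (fun k Hk => Hl k ltac:(lia))). specialize (Hl L ltac:(lia)).
  set (U := Rsum u L) in *. set (S := Rsum lam L) in *. set (T := Rsum (fun k => u k ^ 2 / lam k) L) in *.
  set (v := u L) in *. set (l := lam L) in *.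
  assert (Hkey : 2 * U * v <= S * (v^2 / l) + l * T).
  { destruct (Req_dec S 0) as [H0|H0].
    - rewrite H0 in IHL. assert (U = 0) by nra. rewrite H, H0. nra.
    - assert (HSp : 0 < S) by lra.
      assert (l * T >= l * (U^2 / S)).
      { apply Rle_ge. apply Rmult_le_compat_l; [lra|]. apply (Rmult_le_reg_r S); [lra|].
        unfold Rdiv; rewrite Rmult_assoc, Rinv_l by lra. nra. }
      assert (S * (v^2 / l) + l * (U^2 / S) - 2 * U * v = (S * v - l * U)^2 / (l * S)) by (field; lra).
      assert (0 <= (S * v - l * U)^2 / (l * S)).
      { apply Rmult_le_pos. apply pow2_ge_0. apply Rlt_le, Rinv_0_lt_compat. nra. }
      lra. }
  assert (v ^ 2 / l * l = v^2) by (field; lra).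
  replace ((S + l) * (T + v^2/l)) with (S*T + S*(v^2/l) + l*T + v^2/l*l) by ring.
  assert ((U+v)^2 = U^2 + 2*U*v + v^2) by ring. lra.
Qed.

Lemma half_sum_le L : Rsum (fun k => (1/2)^k) L <= 2.
Proof. assert (forall L, Rsum (fun k => (1/2)^k) L = 2 - 2 * (1/2)^L).
  { induction L0; simpl; [lra|]. rewrite IHL0. lra. }
  rewrite H. pose proof (pow_le (1/2) L ltac:(lra)). lra. Qed.

Lemma geo_sum q L : (1 - q) * Rsum (fun k => q^k) L = 1 - q^L.
Proof. induction L; simpl; [lra|]. rewrite Rmult_plus_distr_l, IHL. ring. Qed.

Lemma geo_bound q L : 0 <= q <= 1/2 ->
  Rsum (fun k => if Nat.eq_dec k 0 then 0 else q^k) L <= 2 * q.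
Proof. intros Hq. destruct L. simpl; lra.
  rewrite Rsum_drop0 by lia. pose proof (geo_sum q (S L)).
  assert (0 <= q ^ S L) by (apply pow_le; lra).
  assert (Rsum (fun k => q^k) (S L) <= 1 / (1 - q)).
  { apply (Rmult_le_reg_l (1 - q)); [lra|]. rewrite H. field_simplify; lra. }
  assert (1 / (1 - q) - 1 <= 2 * q).
  { apply (Rmult_le_reg_l (1 - q)); [lra|]. field_simplify; [|lra]. nra. }
  change (Rsum (pow q) (S L)) with (Rsum (fun k => q^k) (S L)). simpl pow; lra. Qed.

Lemma sq_ineq d X Y Z : 0 < d < 1 -> 0 <= X -> 0 <= Y -> 0 <= Z -> Y - Z <= X ->
  (1 - d) * Y^2 - (1/d) * Z^2 <= X^2.
Proof. intros Hd HX HY HZ H.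
  assert (2 * Y * Z <= d * Y^2 + Z^2 / d).
  { assert (d * Y^2 + Z^2 / d - 2 * Y * Z = (d * Y - Z)^2 / d) by (field; lra).
    assert (0 <= (d * Y - Z)^2 / d) by (apply Rmult_le_pos; [apply pow2_ge_0|apply Rlt_le, Rinv_0_lt_compat; lra]).
    lra. }
  assert (Z^2 / d >= Z^2) by (unfold Rdiv; assert (1 <= / d) by (rewrite <- Rinv_1; apply Rinv_le_contravar; lra); nra).
  destruct (Rle_dec Z Y).
  - assert ((Y - Z)^2 <= X^2) by (apply pow_incr; lra).
    unfold Rdiv in *. nra.
  - assert ((1 - d) * Y^2 <= Z^2) by nra. assert (0 <= X^2) by apply pow2_ge_0.
    unfold Rdiv in *. nra.
Qed.


Lemma limit_arg X Y C : 0 <= C -> (forall n, Y - C * (1/4)^n <= X) -> Y <= X.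
Proof. intros HC H. destruct (Rle_dec Y X); auto. exfalso.
  destruct (pow_lt_1_zero (1/4) ltac:(rewrite Rabs_right; lra) ((Y - X)/(C+1)) ltac:(apply Rdiv_lt_0_compat; lra)) as [n1 Hn].
  specialize (Hn n1 (Nat.le_refl n1)). specialize (H n1).
  rewrite Rabs_right in Hn by (apply Rle_ge, pow_le; lra).
  assert (0 <= (1/4)^n1) by (apply pow_le; lra).
  assert ((C + 1) * (1/4)^n1 < Y - X).
  { apply (Rmult_lt_compat_l (C+1)) in Hn; [|lra].
    replace ((C+1)*((Y-X)/(C+1))) with (Y-X) in Hn by (field; lra). lra. }
  nra. Qed.

Lemma is_RInt_eqv (f : R -> R) a b (v w : R) : is_RInt f a b v -> v = w -> is_RInt f a b w.
Proof. intros H ->; auto. Qed.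

Lemma u2_eq h A k : (h^k * A)^2 / (1/2)^k = (2 * h^2)^k * A^2.
Proof. rewrite Rpow_mult_distr. rewrite <- pow_mult, Nat.mul_comm, pow_mult.
  assert (0 < (1/2)^k) by (apply pow_lt; lra).
  assert ((1/2)^k * 2^k = 1). { rewrite <- Rpow_mult_distr. replace (1/2*2) with 1 by lra. apply pow1. }
  rewrite (Rpow_mult_distr 2 (h^2) k). replace (2^k) with (/ (1/2)^k). field; lra.
  apply (Rmult_eq_reg_l ((1/2)^k)); [|lra]. rewrite Rinv_r by lra. lra. Qed.

Lemma MZ (eps : R) (M N : nat) tp K (g : nat -> Z) (a : nat -> C) :
  0 < eps < 1 -> (0 < M)%nat -> (0 < N)%nat ->
  (forall n, (n < N)%nat -> -1 <= tp n <= 1) ->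
  (forall n m, (n < N)%nat -> (m < N)%nat -> tp n = tp m -> n = m) ->
  Rbar_le (density tp N) (Finite (eps / (32 * PI) / INR M)) ->
  (forall k, (k < K)%nat -> Rabs (IZR (g k)) <= INR M) ->
  (forall k l, (k < K)%nat -> (l < K)%nat -> g k = g l -> k = l) ->
  (1 - eps) * Rsum (fun k => Cmod (a k) ^ 2) K <=
  Rsum (fun n => tau tp N n * Cmod (TP a g K (tp n)) ^ 2) N.
Proof.
  intros Heps HM HN Hrange Hinj Hdens Hg Hginj.
  pose proof PI_gt3 as HPI.
  assert (HM1 : 1 <= INR M) by (replace 1 with (INR 1) by auto; apply le_INR; lia).
  set (c := eps / (32 * PI)) in *.
  assert (Hc : 0 < c < 1/96).
  { unfold c; split. apply Rdiv_lt_0_compat; lra.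
    apply (Rmult_lt_reg_r (32 * PI)); [lra|]. unfold Rdiv; rewrite Rmult_assoc, Rinv_l by lra. nra. }
  set (h0 := c / INR M) in *.
  assert (Hh0 : 0 < h0 < 1/3).
  { unfold h0; split. apply Rdiv_lt_0_compat; lra.
    apply (Rmult_lt_reg_r (INR M)); [lra|]. unfold Rdiv; rewrite Rmult_assoc, Rinv_l by lra. nra. }
  set (h := 4 * h0).
  set (W := INR M * PI).
  assert (HWh : W * h = eps / 8).
  { unfold W, h, h0, c. field. split; lra. }
  assert (HW : 0 < W) by (unfold W; nra).
  assert (Hh : 0 < h) by (unfold h; lra).
  assert (HG : forall l, (l < K)%nat -> Rabs (Gf g l) <= W).
  { intros l Hl. unfold Gf, W. rewrite Rabs_mult, (Rabs_right PI) by lra.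
    apply Rmult_le_compat_r; [lra|]. apply Hg; auto. }
  assert (Hx : forall s, Rabs s <= h -> forall l, (l < K)%nat -> Rabs (Gf g l * s) <= 1/2).
  { intros s Hs l Hl. rewrite Rabs_mult. specialize (HG l Hl).
    assert (Rabs (Gf g l) * Rabs s <= W * h).
    { apply Rmult_le_compat; auto; apply Rabs_pos. }
    lra. }
  set (q := 2 * h^2 * W^2).
  assert (Hq : q = eps^2 / 32).
  { unfold q. replace (2 * h^2 * W^2) with (2 * (W * h)^2) by ring. rewrite HWh. field. }
  assert (Hq2 : 0 <= q <= 1/2) by (rewrite Hq; nra).
  set (d := eps / 2).
  set (S2 := Rsum (fun k => Cmod (a k) ^ 2) K).
  assert (HS : 0 <= S2) by (apply Rsum_nonneg; intros; apply pow2_ge_0).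
  set (Sa := Rsum (fun l => Cmod (a l)) K).
  set (GN := fun n => Cmod (TP a g K (tp n)) ^ 2).
  change (Rsum (fun n => tau tp N n * Cmod (TP a g K (tp n)) ^ 2) N) with (Rsum (fun n => tau tp N n * GN n) N).
  apply (limit_arg _ _ (16 / eps * Sa^2)).
  { apply Rmult_le_pos. apply Rlt_le, Rdiv_lt_0_compat; lra. apply pow2_ge_0. }
  intros n0.
  set (L := (2 * S (2 * n0 + 1))%nat).
  set (R := 2 * (1/2)^n0 * Sa).
  set (F := fun t => Rsum (fun n => indicator (voronoi tp N n) t * GN n) N).
  set (SA := fun t => Rsum (fun k => if Nat.eq_dec k 0 then 0 else (2 * h^2)^k * Cmod (Ak a g K k t)^2) L).
  set (Hf := fun t => (1 - d) * Cmod (TP a g K t)^2 - (1/d) * (4 * SA t + 2 * R^2)).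
  set (Sk := fun k => Rsum (fun l => Cmod (Cmult (a l) (RtoC (Gf g l ^ k)))^2) K).
  assert (IF : is_RInt F (-1) 1 (2 * Rsum (fun n => tau tp N n * GN n) N)).
  { unfold F. apply (is_RInt_eqv _ _ _ (Rsum (fun n => GN n * (ub tp n N - lb tp n N)) N)).
    apply is_RInt_Rsum. intros n Hn.
    apply (is_RInt_ext (fun t => GN n * indicator (voronoi tp N n) t)). intros; apply Rmult_comm.
    apply is_RInt_scal'. apply is_RInt_vor; auto.
    rewrite <- Rsum_scal. apply Rsum_ext; intros n Hn. rewrite (tau_eq tp N Hrange Hinj n Hn). field. }
  assert (IH : is_RInt Hf (-1) 1
     ((1 - d) * (2 * S2) - (1/d) * (4 * Rsum (fun k => if Nat.eq_dec k 0 then 0 else (2 * h^2)^k * (2 * Sk k)) L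
                                  + 2 * 2 * R^2))).
  { unfold Hf. apply is_RInt_minus'. apply is_RInt_scal'. apply TP_norm2; auto.
    apply is_RInt_scal'. apply (is_RInt_eqv _ _ _ (4 * Rsum (fun k => if Nat.eq_dec k 0 then 0 else (2 * h^2)^k * (2 * Sk k)) L + (1 - -1) * (2 * R^2))).
    apply is_RInt_plus'. apply is_RInt_scal'. unfold SA. apply is_RInt_Rsum. intros k Hk.
    destruct (Nat.eq_dec k 0).
    - pose proof (is_RInt_const' (-1) 1 0) as H0; rewrite Rmult_0_r in H0; exact H0.
    - apply is_RInt_scal'. unfold Ak, Sk. apply TP_norm2; auto.
    - apply is_RInt_const'.
    - ring. }
  assert (Hpt : forall t, -1 < t < 1 -> Hf t <= F t).
  { intros t Ht. destruct (nearest tp N t h0 HN Hh0 Hdens Ht) as [n [Hn [Hv Hdist]]].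
    set (s := tp n - t).
    assert (Hs : Rabs s <= h) by (unfold s, h; rewrite Rabs_minus_sym; lra).
    assert (HF : GN n <= F t).
    { unfold F. replace (GN n) with (indicator (voronoi tp N n) t * GN n).
      apply (Rsum_term_le (fun n => indicator (voronoi tp N n) t * GN n)); auto.
      intros m Hm. apply Rmult_le_pos. unfold indicator; destruct excluded_middle_informative; lra.
      unfold GN; apply pow2_ge_0.
      unfold indicator; destruct excluded_middle_informative; [ring|contradiction]. }
    assert (Htp : tp n = t + s) by (unfold s; ring).
    set (X := Cmod (TP a g K (t + s))). set (Y := Cmod (TP a g K t)).
    set (Z := Cmod (Cminus (TP a g K (t + s)) (TP a g K t))).
    set (u := fun k => if Nat.eq_dec k 0 then 0 else h^k * Cmod (Ak a g K k t)).
    assert (HT := taylor a g K t s h n0 Hs (Hx s Hs)).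
    fold Z in HT. fold L in HT. change (Rsum (fun k => if Nat.eq_dec k 0 then 0 else h^k * Cmod (Ak a g K k t)) L) with (Rsum u L) in HT.
    change (2 * (1/2)^n0 * Rsum (fun l => Cmod (a l)) K) with R in HT.
    assert (HZ : 0 <= Z) by apply Cmod_ge_0.
    assert (HR : 0 <= R) by (unfold R; apply Rmult_le_pos; [apply Rmult_le_pos; [lra|apply pow_le; lra]|apply Rsum_nonneg; intros; apply Cmod_ge_0]).
    assert (HB : (Rsum u L)^2 <= 2 * SA t).
    { eapply Rle_trans. apply (wCS u (fun k => (1/2)^k)). intros; apply pow_lt; lra.
      assert (Rsum (fun k => u k ^ 2 / (1/2)^k) L = SA t).
      { unfold SA. apply Rsum_ext; intros k _. unfold u. destruct (Nat.eq_dec k 0). field. apply pow_nonzero; lra.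
        apply u2_eq. }
      rewrite H. apply Rmult_le_compat_r. unfold SA. apply Rsum_nonneg; intros k _.
      destruct (Nat.eq_dec k 0); [lra|]. apply Rmult_le_pos; [apply pow_le; nra|apply pow2_ge_0].
      apply half_sum_le. }
    assert (HBu : 0 <= Rsum u L).
    { apply Rsum_nonneg; intros k _. unfold u; destruct Nat.eq_dec; [lra|].
      apply Rmult_le_pos; [apply pow_le; lra|apply Cmod_ge_0]. }
    assert (HZ2 : Z^2 <= 4 * SA t + 2 * R^2).
    { assert (Z^2 <= (Rsum u L + R)^2) by (apply pow_incr; lra).
      assert ((Rsum u L + R)^2 <= 2 * (Rsum u L)^2 + 2 * R^2).
      { assert (0 <= (Rsum u L - R)^2) by apply pow2_ge_0.
        assert ((Rsum u L + R)^2 = 2 * (Rsum u L)^2 + 2 * R^2 - (Rsum u L - R)^2) by ring. lra. }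
      lra. }
    assert (HXYZ : Y - Z <= X).
    { unfold X, Y, Z. assert (Cmod (TP a g K t) <= Cmod (TP a g K (t + s)) + Cmod (Cminus (TP a g K t) (TP a g K (t + s)))).
      { replace (TP a g K t) with (Cplus (TP a g K (t + s)) (Cminus (TP a g K t) (TP a g K (t + s)))) at 1 by ring.
        apply Cmod_triangle. }
      replace (Cminus (TP a g K t) (TP a g K (t + s))) with (Copp (Cminus (TP a g K (t + s)) (TP a g K t))) in H by ring.
      rewrite Cmod_opp in H. lra. }
    assert (Hsq := sq_ineq d X Y Z ltac:(unfold d; lra) (Cmod_ge_0 _) (Cmod_ge_0 _) HZ HXYZ).
    assert (GN n = X^2) by (unfold GN, X; rewrite Htp; auto).
    unfold Hf. fold Y.
    assert ((1/d) * Z^2 <= (1/d) * (4 * SA t + 2 * R^2)).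
    { apply Rmult_le_compat_l; auto. apply Rlt_le, Rdiv_lt_0_compat; unfold d; lra. }
    lra. }
  assert (Hle : RInt Hf (-1) 1 <= RInt F (-1) 1).
  { apply RInt_le. lra. eexists; eauto. eexists; eauto. auto. }
  rewrite (is_RInt_unique _ _ _ _ IH), (is_RInt_unique _ _ _ _ IF) in Hle.
  assert (HSk : forall k, (k < L)%nat -> (if Nat.eq_dec k 0 then 0 else (2 * h^2)^k * (2 * Sk k)) <=
                  (2 * S2) * (if Nat.eq_dec k 0 then 0 else q^k)).
  { intros k _. destruct (Nat.eq_dec k 0); [lra|].
    assert (Sk k <= (W^2)^k * S2).
    { unfold Sk, S2. rewrite <- Rsum_scal. apply Rsum_le; intros l Hl.
      rewrite Cmod_mult, Cmod_R, Rpow_mult_distr.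
      assert (Rabs (Gf g l ^ k) ^ 2 <= (W^2)^k).
      { rewrite <- RPow_abs, <- pow_mult, Nat.mul_comm, pow_mult. apply pow_incr. split. apply pow2_ge_0.
        apply pow_incr. split. apply Rabs_pos. apply HG; auto. }
      assert (0 <= Cmod (a l) ^ 2) by apply pow2_ge_0. nra. }
    assert (0 <= (2 * h^2)^k) by (apply pow_le; nra).
    assert ((2 * h^2)^k * (W^2)^k = q^k) by (unfold q; rewrite <- Rpow_mult_distr; f_equal; ring).
    assert ((2 * h^2)^k * Sk k <= (2 * h^2)^k * ((W^2)^k * S2)) by (apply Rmult_le_compat_l; auto).
    nra. }
  assert (HX : Rsum (fun k => if Nat.eq_dec k 0 then 0 else (2 * h^2)^k * (2 * Sk k)) L <= 4 * q * S2).
  { eapply Rle_trans. apply Rsum_le. apply HSk. rewrite Rsum_scal.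
    pose proof (geo_bound q L Hq2). nra. }
  assert (HR2 : R^2 = 4 * (1/4)^n0 * Sa^2).
  { unfold R. rewrite !Rpow_mult_distr. rewrite <- pow_mult, Nat.mul_comm, pow_mult.
    replace ((1/2)^2) with (1/4) by field. ring. }
  assert (Hd : 1 / d = 2 / eps) by (unfold d; field; lra).
  rewrite Hd, HR2 in Hle.
  assert (2 / eps * (4 * Rsum (fun k => if Nat.eq_dec k 0 then 0 else (2 * h^2)^k * (2 * Sk k)) L)
          <= eps * S2).
  { assert (0 < 2 / eps) by (apply Rdiv_lt_0_compat; lra).
    apply Rle_trans with (2 / eps * (4 * (4 * q * S2))). apply Rmult_le_compat_l; lra.
    rewrite Hq. right. field. lra. }
  assert (2 / eps * (2 * 2 * (4 * (1/4)^n0 * Sa^2)) = 2 * (16 / eps * Sa^2 * (1/4)^n0)) by (field; lra).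
  unfold d in Hle. lra.
Qed.


Section LS.
Variable N : nat.
Variable col : nat -> nat -> C.

Definition ip (u v : nat -> C) : C := Csum (fun n => Cmult (Cconj (u n)) (v n)) N.
Definition nrm (u : nat -> C) : R := Rsum (fun n => Cmod (u n) ^ 2) N.
Definition Amul (K : nat) (b : nat -> C) (n : nat) : C := Csum (fun k => Cmult (col k n) (b k)) K.

Lemma ip_minus_r u v w : ip u (fun n => Cminus (v n) (w n)) = Cminus (ip u v) (ip u w).
Proof. unfold ip. rewrite <- Csum_minus. apply Csum_ext; intros; ring. Qed.
Lemma ip_scal_r u v a : ip u (fun n => Cmult a (v n)) = Cmult a (ip u v).
Proof. unfold ip. rewrite <- Csum_scal. apply Csum_ext; intros; ring. Qed.
Lemma ip_plus_l u w v : ip (fun n => Cplus (u n) (w n)) v = Cplus (ip u v) (ip w v).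
Proof. unfold ip. rewrite <- Csum_plus. apply Csum_ext; intros; rewrite Cplus_conj; ring. Qed.

Lemma ip_A_l K w r : ip (Amul K w) r = Csum (fun k => Cmult (Cconj (w k)) (ip (col k) r)) K.
Proof. unfold ip, Amul.
  rewrite (Csum_ext _ (fun n => Csum (fun k => Cmult (Cconj (w k)) (Cmult (Cconj (col k n)) (r n))) K)).
  rewrite Csum_swap. apply Csum_ext; intros k _. rewrite <- Csum_scal. auto.
  intros n _. rewrite Csum_conj.
  rewrite Cmult_comm, <- Csum_scal. apply Csum_ext; intros k _. rewrite Cmult_conj. ring. Qed.

Lemma ip_self v : ip v v = RtoC (nrm v).
Proof. unfold ip, nrm. rewrite RtoC_Rsum. apply Csum_ext; intros n _.
  rewrite Cmod2_alt. destruct (v n) as [p q]. unfold Re, Im; simpl. unfold RtoC; cpair. Qed.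

Lemma nrm_nonneg v : 0 <= nrm v.
Proof. apply Rsum_nonneg; intros; apply pow2_ge_0. Qed.

Lemma nrm_zero v : nrm v = 0 -> forall n, (n < N)%nat -> v n = RtoC 0.
Proof. unfold nrm. intros H.
  assert (forall m, (m <= N)%nat -> Rsum (fun n => Cmod (v n) ^ 2) m = 0 /\ forall n, (n < m)%nat -> v n = RtoC 0).
  { intros m. induction m; intros Hm.
    - split; auto. intros; lia.
    - assert (Hle : Rsum (fun n => Cmod (v n) ^ 2) (S m) <= Rsum (fun n => Cmod (v n) ^ 2) N).
      { replace N with (S m + (N - S m))%nat by lia. rewrite Rsum_split.
        assert (0 <= Rsum (fun k => Cmod (v (S m + k)%nat) ^ 2) (N - S m)) by (apply Rsum_nonneg; intros; apply pow2_ge_0). lra. }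
      rewrite H in Hle. cbn [Rsum] in Hle.
      assert (0 <= Rsum (fun n => Cmod (v n) ^ 2) m) by (apply Rsum_nonneg; intros; apply pow2_ge_0).
      assert (0 <= Cmod (v m) ^ 2) by apply pow2_ge_0.
      assert (Cmod (v m) ^ 2 = 0) by lra.
      assert (Cmod (v m) = 0) by (destruct (Req_dec (Cmod (v m)) 0); auto; exfalso; apply (pow_nonzero _ 2 H3); auto).
      split. cbn [Rsum]; lra. intros n Hn. destruct (Nat.eq_dec n m). subst; apply Cmod_eq_0; auto.
      apply IHm; lia. }
  intros n Hn. apply (H0 N (Nat.le_refl N)); auto. Qed.

Lemma nrm_minus u v : nrm (fun n => Cminus (u n) (v n)) = nrm u + nrm v - 2 * fst (ip v u).
Proof. unfold nrm, ip. rewrite Csum_re, <- Rsum_plus, <- Rsum_scal.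
  unfold Rminus. rewrite <- Rsum_opp, <- Rsum_plus.
  apply Rsum_ext; intros n _. rewrite !Cmod2_alt. destruct (u n), (v n); unfold Re, Im; simpl; ring. Qed.

Lemma Amul_ext K b b' n : (forall k, (k < K)%nat -> b k = b' k) -> Amul K b n = Amul K b' n.
Proof. intros H. unfold Amul. apply Csum_ext; intros. rewrite H; auto. Qed.

Lemma Amul_minus K b b' n : Amul K (fun k => Cminus (b k) (b' k)) n = Cminus (Amul K b n) (Amul K b' n).
Proof. unfold Amul. rewrite <- Csum_minus. apply Csum_ext; intros; ring. Qed.

Lemma GS : forall K (y : nat -> C), exists b : nat -> C,
  forall k, (k < K)%nat -> ip (col k) (fun n => Cminus (y n) (Amul K b n)) = RtoC 0.
Proof. induction K; intros y.
  - exists (fun _ => RtoC 0). intros; lia.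
  - destruct (IHK y) as [b Hb]. destruct (IHK (col K)) as [w Hw].
    set (r := fun n => Cminus (y n) (Amul K b n)) in *.
    set (v := fun n => Cminus (col K n) (Amul K w n)) in *.
    assert (HAw : forall u, (forall k, (k < K)%nat -> ip (col k) u = RtoC 0) -> ip (Amul K w) u = RtoC 0).
    { intros u Hu. rewrite ip_A_l. apply Csum_zero. intros k Hk. rewrite Hu; auto. ring. }
    assert (HcolK : forall u, ip (col K) u = Cplus (ip v u) (ip (Amul K w) u)).
    { intros u. rewrite <- ip_plus_l. unfold ip. apply Csum_ext; intros; unfold v. f_equal. f_equal. ring. }
    destruct (Req_dec (nrm v) 0) as [Hv0|Hv0].
    + exists (fun k => if Nat.eq_dec k K then RtoC 0 else b k).
      assert (Hr : (fun n => Cminus (y n) (Amul (S K) (fun k => if Nat.eq_dec k K then RtoC 0 else b k) n)) = r).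
      { apply functional_extensionality; intros n. unfold r, Amul. simpl. destruct (Nat.eq_dec K K); [|congruence].
        rewrite (Csum_ext _ (fun k => Cmult (col k n) (b k))). ring.
        intros k Hk. destruct (Nat.eq_dec k K); [lia|auto]. }
      rewrite Hr. intros k Hk. destruct (Nat.eq_dec k K).
      * subst k. rewrite HcolK, HAw by auto.
        assert (ip v r = RtoC 0). { unfold ip. apply Csum_zero. intros n Hn. rewrite (nrm_zero v Hv0 n Hn). unfold Cconj, RtoC; cpair. }
        rewrite H. ring.
      * apply Hb; lia.
    + set (al := Cdiv (ip v r) (RtoC (nrm v))).
      exists (fun k => if Nat.eq_dec k K then al else Cminus (b k) (Cmult al (w k))).
      assert (Hr : (fun n => Cminus (y n) (Amul (S K) (fun k => if Nat.eq_dec k K then al else Cminus (b k) (Cmult al (w k))) n))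
                   = (fun n => Cminus (r n) (Cmult al (v n)))).
      { apply functional_extensionality; intros n. unfold r, v, Amul. simpl. destruct (Nat.eq_dec K K); [|congruence].
        rewrite (Csum_ext _ (fun k => Cminus (Cmult (col k n) (b k)) (Cmult al (Cmult (col k n) (w k))))).
        rewrite Csum_minus, Csum_scal. ring.
        intros k Hk. destruct (Nat.eq_dec k K); [lia|]. ring. }
      rewrite Hr.
      assert (Hlow : forall k, (k < K)%nat -> ip (col k) (fun n => Cminus (r n) (Cmult al (v n))) = RtoC 0).
      { intros k Hk. rewrite ip_minus_r, ip_scal_r. rewrite Hb, Hw by auto. ring. }
      intros k Hk. destruct (Nat.eq_dec k K).
      * subst k. rewrite HcolK, (HAw _ Hlow). rewrite ip_minus_r, ip_scal_r, ip_self.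
        unfold al. field. intro Hc. apply Hv0. injection Hc; auto.
      * apply Hlow; lia.
Qed.

Lemma LS K (y : nat -> C) : exists b0 : nat -> C, forall b : nat -> C,
  nrm (fun n => Cminus (y n) (Amul K b n)) =
  nrm (fun n => Cminus (y n) (Amul K b0 n)) + nrm (fun n => Cminus (Amul K b n) (Amul K b0 n)).
Proof. destruct (GS K y) as [b0 Hb0]. exists b0. intros b.
  set (r := fun n => Cminus (y n) (Amul K b0 n)) in *.
  set (D := fun n => Cminus (Amul K b n) (Amul K b0 n)).
  replace (fun n => Cminus (y n) (Amul K b n)) with (fun n => Cminus (r n) (D n)).
  2: { apply functional_extensionality; intros n; unfold r, D; ring. }
  rewrite nrm_minus.
  assert (ip D r = RtoC 0).
  { replace D with (Amul K (fun k => Cminus (b k) (b0 k))).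
    rewrite ip_A_l. apply Csum_zero; intros k Hk. rewrite Hb0; auto. ring.
    apply functional_extensionality; intros n. unfold D. apply Amul_minus. }
  rewrite H. simpl. ring.
Qed.
End LS.


Lemma sum_n_R (a : nat -> R) n : sum_n a n = Rsum a (S n).
Proof. induction n. rewrite sum_O; simpl; lra. rewrite sum_Sn, IHn. simpl. unfold plus; simpl. auto. Qed.

Lemma sum_n_C (a : nat -> C) n : @sum_n (NormedModule.AbelianMonoid C_AbsRing C_NormedModule) a n = Csum a (S n).
Proof. induction n. rewrite sum_O; simpl. apply injective_projections; simpl; lra.
  rewrite sum_Sn, IHn. simpl. auto. Qed.

Lemma Rsum_tail_zero (a : nat -> R) m n : (forall k, (m <= k)%nat -> a k = 0) -> (m <= n)%nat -> Rsum a n = Rsum a m.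
Proof. intros H Hn. replace n with (m + (n - m))%nat by lia. rewrite Rsum_split.
  rewrite (Rsum_zero (fun k => a (m + k)%nat)). lra. intros; apply H; lia. Qed.

Lemma Csum_tail_zero (a : nat -> C) m n : (forall k, (m <= k)%nat -> a k = RtoC 0) -> (m <= n)%nat -> Csum a n = Csum a m.
Proof. intros H Hn. replace n with (m + (n - m))%nat by lia. rewrite Csum_split.
  rewrite (Csum_zero (fun k => a (m + k)%nat)). apply injective_projections; simpl; lra. intros; apply H; lia. Qed.

Lemma is_series_fin_R (a : nat -> R) m : (forall k, (m <= k)%nat -> a k = 0) -> is_series a (Rsum a m).
Proof. intros H. unfold is_series.
  apply (filterlim_ext_loc (fun _ => Rsum a m)). exists m. intros n Hn.
  rewrite sum_n_R. symmetry. apply Rsum_tail_zero; auto.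
  apply filterlim_const. Qed.

Lemma is_series_fin_C (a : nat -> C) m : (forall k, (m <= k)%nat -> a k = RtoC 0) ->
  @is_series C_AbsRing C_NormedModule a (Csum a m).
Proof. intros H. unfold is_series.
  apply (filterlim_ext_loc (fun _ => Csum a m)). exists m. intros n Hn.
  rewrite sum_n_C. symmetry. apply Csum_tail_zero; auto.
  apply filterlim_const. Qed.

Definition fr (M k : nat) : Z := (Z.of_nat k - Z.of_nat M)%Z.
Definition inrange (M : nat) (j : Z) : Prop := (- Z.of_nat M <= j < Z.of_nat M)%Z.

Lemma Rsum_fr_split (G : Z -> R) M :
  Rsum (fun k => G (fr M k)) (2 * M) = Rsum (fun k => G (Z.of_nat k)) M + Rsum (fun k => G (- Z.of_nat (S k))%Z) M.
Proof. replace (2 * M)%nat with (M + M)%nat by lia. rewrite Rsum_split.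
  rewrite (Rsum_ext (fun k => G (fr M (M + k))) (fun k => G (Z.of_nat k))).
  rewrite <- (Rsum_rev (fun k => G (fr M k))).
  rewrite (Rsum_ext (fun k => G (fr M (M - 1 - k))) (fun k => G (- Z.of_nat (S k))%Z)). lra.
  intros k Hk; f_equal; unfold fr; lia.
  intros k Hk; f_equal; unfold fr; lia. Qed.

Lemma Csum_fr_split (G : Z -> C) M :
  Csum (fun k => G (fr M k)) (2 * M) = Cplus (Csum (fun k => G (Z.of_nat k)) M) (Csum (fun k => G (- Z.of_nat (S k))%Z) M).
Proof. replace (2 * M)%nat with (M + M)%nat by lia. rewrite Csum_split.
  rewrite (Csum_ext (fun k => G (fr M (M + k))) (fun k => G (Z.of_nat k))).
  rewrite <- (Csum_rev (fun k => G (fr M k))).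
  rewrite (Csum_ext (fun k => G (fr M (M - 1 - k))) (fun k => G (- Z.of_nat (S k))%Z)). ring.
  intros k Hk; f_equal; unfold fr; lia.
  intros k Hk; f_equal; unfold fr; lia. Qed.

Lemma zsumR_fin (G : Z -> R) M : (forall j, ~ inrange M j -> G j = 0) ->
  ex_zseriesR G /\ zSeriesR G = Rsum (fun k => G (fr M k)) (2 * M).
Proof. intros H.
  assert (H1 : is_series (fun k => G (Z.of_nat k)) (Rsum (fun k => G (Z.of_nat k)) M)).
  { apply is_series_fin_R. intros k Hk. apply H. unfold inrange; lia. }
  assert (H2 : is_series (fun k => G (- Z.of_nat (S k))%Z) (Rsum (fun k => G (- Z.of_nat (S k))%Z) M)).
  { apply is_series_fin_R. intros k Hk. apply H. unfold inrange; lia. }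
  split. split; eexists; eauto.
  unfold zSeriesR. rewrite (is_series_unique _ _ H1), (is_series_unique _ _ H2). rewrite Rsum_fr_split; auto.
Qed.

Lemma zsumC_fin (G : Z -> C) M : (forall j, ~ inrange M j -> G j = RtoC 0) ->
  is_zsum G (Csum (fun k => G (fr M k)) (2 * M)).
Proof. intros H. exists (Csum (fun k => G (Z.of_nat k)) M), (Csum (fun k => G (- Z.of_nat (S k))%Z) M).
  split; [|split].
  - apply is_series_fin_C. intros k Hk. apply H. unfold inrange; lia.
  - apply is_series_fin_C. intros k Hk. apply H. unfold inrange; lia.
  - apply Csum_fr_split. Qed.

Lemma Cmod_series_le (a : nat -> C) l : @is_series C_AbsRing C_NormedModule a l ->
  ex_series (fun n => Cmod (a n)) -> Cmod l <= Series (fun n => Cmod (a n)).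
Proof. intros Ha Hm.
  assert (Hf : filterlim (fun n => Cmod (sum_n a n)) eventually (locally (Cmod l))).
  { assert (Hf0 : filterlim (fun n => norm (sum_n a n)) eventually (locally (norm l))).
    { eapply filterlim_comp; [apply Ha | apply filterlim_norm]. }
    exact Hf0. }
  assert (Hg : filterlim (sum_n (fun n => Cmod (a n))) eventually (locally (Series (fun n => Cmod (a n))))).
  { apply Series_correct; auto. }
  apply (filterlim_le (F := eventually) (fun n => Cmod (sum_n a n)) (sum_n (fun n => Cmod (a n))) (Cmod l) (Series (fun n => Cmod (a n)))); auto.
  exists 0%nat. intros n _. rewrite sum_n_C, sum_n_R. apply Cmod_Csum_le. Qed.

Lemma term_le_series (a : nat -> R) m : (forall k, 0 <= a k) -> ex_series a -> a m <= Series a.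
Proof. intros Hp He.
  assert (Hs : is_series (fun k => if Nat.eq_dec k m then a m else 0) (a m)).
  { pose proof (is_series_fin_R (fun k => if Nat.eq_dec k m then a m else 0) (S m)) as Hf.
    rewrite Rsum_kron in Hf by lia. apply Hf.
    intros k Hk; destruct Nat.eq_dec; [lia|auto]. }
  rewrite <- (is_series_unique _ _ Hs). apply Series_le; auto.
  intros n; destruct Nat.eq_dec; [subst; split; auto; lra|split; auto; lra]. Qed.

Lemma ex_series_le_R (a b : nat -> R) : (forall n, 0 <= a n <= b n) -> ex_series b -> ex_series a.
Proof. intros H Hb. apply (ex_series_le a b); auto. intros n. unfold norm; simpl.
  rewrite Rabs_right by (destruct (H n); lra). apply H. Qed.


Definition inb (M : nat) (j : Z) : bool := andb (Z.leb (- Z.of_nat M) j) (Z.ltb j (Z.of_nat M)).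

Lemma inb_true M j : inb M j = true <-> inrange M j.
Proof. unfold inb, inrange. rewrite Bool.andb_true_iff, Z.leb_le, Z.ltb_lt. tauto. Qed.
Lemma inb_false M j : inb M j = false <-> ~ inrange M j.
Proof. rewrite <- inb_true. destruct (inb M j); split; intros; try congruence; tauto. Qed.

Lemma PM_in M x j : inrange M j -> PM M x j = x j.
Proof. intros H. unfold PM. fold (inb M j). apply inb_true in H. rewrite H; auto. Qed.
Lemma PM_out M x j : ~ inrange M j -> PM M x j = RtoC 0.
Proof. intros H. unfold PM. fold (inb M j). apply inb_false in H. rewrite H; auto. Qed.

Lemma fr_in M k : (k < 2 * M)%nat -> inrange M (fr M k).
Proof. unfold inrange, fr; lia. Qed.
Lemma fr_inv M j : inrange M j -> fr M (Z.to_nat (j + Z.of_nat M)) = j.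
Proof. unfold inrange, fr; lia. Qed.
Lemma fr_inv_lt M j : inrange M j -> (Z.to_nat (j + Z.of_nat M) < 2 * M)%nat.
Proof. unfold inrange; lia. Qed.
Lemma fr_inv2 M k : (k < 2 * M)%nat -> Z.to_nat (fr M k + Z.of_nat M) = k.
Proof. unfold fr; lia. Qed.

Definition toZ (M : nat) (b : nat -> C) (j : Z) : C :=
  if inb M j then b (Z.to_nat (j + Z.of_nat M)) else RtoC 0.

Lemma toZ_supp M b : supported_in M (toZ M b).
Proof. intros j Hj. unfold toZ. destruct (inb M j) eqn:E; auto.
  apply inb_true in E. unfold inrange in E; lia. Qed.
Lemma toZ_fr M b k : (k < 2 * M)%nat -> toZ M b (fr M k) = b k.
Proof. intros Hk. unfold toZ. destruct (inb M (fr M k)) eqn:E.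
  rewrite fr_inv2; auto. apply inb_false in E. exfalso; apply E; apply fr_in; auto. Qed.
Lemma supp_toZ M z : supported_in M z -> z = toZ M (fun k => z (fr M k)).
Proof. intros H. apply functional_extensionality; intros j. unfold toZ.
  destruct (inb M j) eqn:E. apply inb_true in E. rewrite fr_inv; auto.
  apply inb_false in E. apply H. unfold inrange in E; lia. Qed.

Lemma nrm_sym N u v : nrm N (fun n => Cminus (u n) (v n)) = nrm N (fun n => Cminus (v n) (u n)).
Proof. unfold nrm. apply Rsum_ext; intros. replace (Cminus (u k) (v k)) with (Copp (Cminus (v k) (u k))) by ring.
  rewrite Cmod_opp; auto. Qed.

Lemma sqrt_add_le a b : 0 <= a -> 0 <= b -> sqrt (a + b) <= sqrt a + sqrt b.
Proof. intros Ha Hb. apply Rsqr_incr_0_var.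
  rewrite Rsqr_sqrt by lra. unfold Rsqr.
  pose proof (sqrt_sqrt a Ha). pose proof (sqrt_sqrt b Hb).
  pose proof (sqrt_pos a). pose proof (sqrt_pos b). nra.
  pose proof (sqrt_pos a). pose proof (sqrt_pos b). lra. Qed.

Lemma sqrt_le_of_sq a b : 0 <= a -> 0 <= b -> a <= b^2 -> sqrt a <= b.
Proof. intros Ha Hb H. rewrite <- (sqrt_pow2 b Hb). apply sqrt_le_1_alt; auto. Qed.

Lemma Series_nonneg (a : nat -> R) : (forall n, 0 <= a n) -> ex_series a -> 0 <= Series a.
Proof. intros H He. assert (H0 : Series (fun _ => 0) = 0).
  { apply is_series_unique. pose proof (is_series_fin_R (fun _ => 0) 0) as Hs. simpl in Hs. apply Hs; auto. }
  rewrite <- H0. apply Series_le; auto. intros; split; [lra|auto]. Qed.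

Definition colU tp N M := fun k n => Umat tp N n (fr M k).

Lemma UPM_Amul tp N M z n : UPM tp N M z n = Amul (colU tp N M) (2 * M) (fun k => z (fr M k)) n.
Proof. reflexivity. Qed.

Lemma Amul_TP tp N M b n :
  Amul (colU tp N M) (2 * M) b n = Cmult (RtoC (sqrt (tau tp N n))) (TP b (fr M) (2 * M) (tp n)).
Proof. unfold Amul, TP, colU, Umat. rewrite <- Csum_scal. apply Csum_ext; intros; ring. Qed.

Lemma nrm_Amul tp N M b :
  (forall n, (n < N)%nat -> -1 <= tp n <= 1) ->
  (forall n m, (n < N)%nat -> (m < N)%nat -> tp n = tp m -> n = m) ->
  nrm N (Amul (colU tp N M) (2 * M) b) = Rsum (fun n => tau tp N n * Cmod (TP b (fr M) (2 * M) (tp n)) ^ 2) N.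
Proof. intros Hr Hi. unfold nrm. apply Rsum_ext; intros n Hn. rewrite Amul_TP, Cmod_mult, Cmod_R.
  rewrite Rpow_mult_distr. rewrite Rabs_right by (apply Rle_ge, sqrt_pos).
  rewrite pow2_sqrt; auto. apply (tau_nonneg tp N Hr Hi n Hn). Qed.

Lemma fr_bound M k : (k < 2 * M)%nat -> Rabs (IZR (fr M k)) <= INR M.
Proof. intros Hk. rewrite <- abs_IZR, INR_IZR_INZ. apply IZR_le. unfold fr; lia. Qed.
Lemma fr_inj M k l : (k < 2 * M)%nat -> (l < 2 * M)%nat -> fr M k = fr M l -> k = l.
Proof. unfold fr; lia. Qed.

Lemma d_le M x j : Cmod (Cminus (x j) (PM M x j)) <= Cmod (x j).
Proof. destruct (Classical_Prop.classic (inrange M j)).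
  rewrite PM_in; auto. replace (Cminus (x j) (x j)) with (RtoC 0) by ring. rewrite Cmod_0. apply Cmod_ge_0.
  rewrite PM_out; auto. replace (Cminus (x j) (RtoC 0)) with (x j) by ring. lra. Qed.

Lemma tail_bound M x t fval :
  ex_zseriesR (fun j => Cmod (x j)) ->
  is_zsum (fun j => Cmult (x j) (phi j t)) fval ->
  Cmod (Cminus fval (TP (fun k => x (fr M k)) (fr M) (2*M) t)) <=
  zSeriesR (fun j => Cmod (Cminus (x j) (PM M x j))).
Proof. intros [Hx1 Hx2] [s1 [s2 [H1 [H2 Heq]]]].
  set (G := fun j => Cmult (PM M x j) (phi j t)).
  assert (HG : is_zsum G (Csum (fun k => G (fr M k)) (2 * M))).
  { apply zsumC_fin. intros j Hj. unfold G. rewrite PM_out; auto. ring. }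
  assert (HT : Csum (fun k => G (fr M k)) (2 * M) = TP (fun k => x (fr M k)) (fr M) (2*M) t).
  { unfold TP, G. apply Csum_ext; intros k Hk. rewrite PM_in; auto. apply fr_in; auto. }
  rewrite <- HT. destruct HG as [p1 [p2 [G1 [G2 Geq]]]]. rewrite Heq, Geq.
  set (d := fun j => Cminus (x j) (PM M x j)).
  assert (E1 : ex_series (fun k => Cmod (d (Z.of_nat k)))).
  { apply (ex_series_le_R _ (fun k => Cmod (x (Z.of_nat k)))); auto. intros; split; [apply Cmod_ge_0|apply d_le]. }
  assert (E2 : ex_series (fun k => Cmod (d (- Z.of_nat (S k))%Z))).
  { apply (ex_series_le_R _ (fun k => Cmod (x (- Z.of_nat (S k))%Z))); auto. intros; split; [apply Cmod_ge_0|apply d_le]. }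
  assert (Hm : forall (g : nat -> Z) a b,
    @is_series C_AbsRing C_NormedModule (fun k => Cmult (x (g k)) (phi (g k) t)) a ->
    @is_series C_AbsRing C_NormedModule (fun k => G (g k)) b ->
    ex_series (fun k => Cmod (d (g k))) ->
    Cmod (Cminus a b) <= Series (fun k => Cmod (d (g k)))).
  { intros g0 a b Ha Hb He. pose proof (is_series_minus _ _ _ _ Ha Hb) as Hab.
    assert (Hc : forall k, Cmod (d (g0 k)) = Cmod (plus (Cmult (x (g0 k)) (phi (g0 k) t)) (opp (G (g0 k))))).
    { intros k. unfold d, G. change (plus ?u (opp ?v)) with (Cminus u v).
      replace (Cminus (Cmult (x (g0 k)) (phi (g0 k) t)) (Cmult (PM M x (g0 k)) (phi (g0 k) t)))
        with (Cmult (Cminus (x (g0 k)) (PM M x (g0 k))) (phi (g0 k) t)) by ring.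
      rewrite Cmod_mult, Cmod_phi. ring. }
    rewrite (Series_ext _ _ Hc). change (Cminus a b) with (plus a (opp b)).
    apply Cmod_series_le; auto. eapply ex_series_ext; [|apply He]. auto. }
  pose proof (Hm (fun k => Z.of_nat k) s1 p1 H1 G1 E1) as Hm1.
  pose proof (Hm (fun k => - Z.of_nat (S k))%Z s2 p2 H2 G2 E2) as Hm2. cbv beta in Hm1, Hm2. unfold d in Hm1, Hm2.
  replace (Cminus (Cplus s1 s2) (Cplus p1 p2)) with (Cplus (Cminus s1 p1) (Cminus s2 p2)) by ring.
  eapply Rle_trans. apply Cmod_triangle. unfold zSeriesR. lra.
Qed.

Lemma l2_split M x b0 :
  ex_zseriesR (fun j => Cmod (x j)) ->
  l2norm (fun j => Cminus (x j) (toZ M b0 j)) <=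
  zSeriesR (fun j => Cmod (Cminus (x j) (PM M x j))) +
  sqrt (Rsum (fun k => Cmod (Cminus (x (fr M k)) (b0 k)) ^ 2) (2 * M)).
Proof. intros [Hx1 Hx2].
  set (d := fun j => Cmod (Cminus (x j) (PM M x j))).
  set (E := fun j => Cmod (Cminus (PM M x j) (toZ M b0 j)) ^ 2).
  assert (HE : ex_zseriesR E /\ zSeriesR E = Rsum (fun k => E (fr M k)) (2 * M)).
  { apply zsumR_fin. intros j Hj. unfold E. rewrite PM_out; auto. unfold toZ.
    destruct (inb M j) eqn:Eq. apply inb_true in Eq; contradiction.
    replace (Cminus (RtoC 0) (RtoC 0)) with (RtoC 0) by ring. rewrite Cmod_0. ring. }
  destruct HE as [[HE1 HE2] HEv].
  assert (HQ : Rsum (fun k => E (fr M k)) (2 * M) = Rsum (fun k => Cmod (Cminus (x (fr M k)) (b0 k)) ^ 2) (2 * M)).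
  { apply Rsum_ext; intros k Hk. unfold E. rewrite PM_in, toZ_fr; auto. apply fr_in; auto. }
  assert (Hsplit : forall j, Cmod (Cminus (x j) (toZ M b0 j)) ^ 2 = d j ^ 2 + E j).
  { intros j. unfold d, E. destruct (Classical_Prop.classic (inrange M j)).
    - rewrite PM_in; auto. replace (Cminus (x j) (x j)) with (RtoC 0) by ring. rewrite Cmod_0. ring.
    - rewrite PM_out; auto. unfold toZ. destruct (inb M j) eqn:Eq. apply inb_true in Eq; contradiction.
      replace (Cminus (RtoC 0) (RtoC 0)) with (RtoC 0) by ring. rewrite Cmod_0.
      replace (Cminus (x j) (RtoC 0)) with (x j) by ring. ring. }
  assert (Ed1 : ex_series (fun k => d (Z.of_nat k))).
  { apply (ex_series_le_R _ (fun k => Cmod (x (Z.of_nat k)))); auto. intros; split; [apply Cmod_ge_0|apply d_le]. }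
  assert (Ed2 : ex_series (fun k => d (- Z.of_nat (S k))%Z)).
  { apply (ex_series_le_R _ (fun k => Cmod (x (- Z.of_nat (S k))%Z))); auto. intros; split; [apply Cmod_ge_0|apply d_le]. }
  set (D1 := Series (fun k => d (Z.of_nat k))). set (D2 := Series (fun k => d (- Z.of_nat (S k))%Z)).
  assert (Hd0 : forall j, 0 <= d j) by (intros; apply Cmod_ge_0).
  assert (HD1 : 0 <= D1) by (apply Series_nonneg; auto).
  assert (HD2 : 0 <= D2) by (apply Series_nonneg; auto).
  assert (Ht1 : forall k, d (Z.of_nat k) <= D1 + D2).
  { intros k. pose proof (term_le_series (fun k => d (Z.of_nat k)) k (fun _ => Hd0 _) Ed1). cbv beta in H. fold D1 in H. lra. }
  assert (Ht2 : forall k, d (- Z.of_nat (S k))%Z <= D1 + D2).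
  { intros k. pose proof (term_le_series (fun k => d (- Z.of_nat (S k))%Z) k (fun _ => Hd0 _) Ed2). cbv beta in H. fold D2 in H. lra. }
  assert (Hsq : forall (g : nat -> Z), ex_series (fun k => d (g k)) -> (forall k, d (g k) <= D1 + D2) ->
     ex_series (fun k => d (g k) ^ 2) /\ Series (fun k => d (g k) ^ 2) <= Series (fun k => d (g k)) * (D1 + D2)).
  { intros g0 He Ht.
    assert (Hb : forall k, 0 <= d (g0 k) ^ 2 <= d (g0 k) * (D1 + D2)).
    { intros k; split. apply pow2_ge_0. specialize (Ht k). specialize (Hd0 (g0 k)). nra. }
    assert (Hes : ex_series (fun k => d (g0 k) * (D1 + D2))) by (apply ex_series_scal_r; auto).
    split. apply (ex_series_le_R _ _ Hb Hes).
    rewrite <- Series_scal_r. apply Series_le; auto. }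
  destruct (Hsq (fun k => Z.of_nat k) Ed1 Ht1) as [Es1 Hs1].
  destruct (Hsq (fun k => - Z.of_nat (S k))%Z Ed2 Ht2) as [Es2 Hs2].
  cbv beta in Es1, Hs1, Es2, Hs2. fold D1 in Hs1. fold D2 in Hs2.
  unfold l2norm, zSeriesR.
  rewrite (Series_ext (fun k => Cmod (Cminus (x (Z.of_nat k)) (toZ M b0 (Z.of_nat k))) ^ 2) (fun k => d (Z.of_nat k) ^ 2 + E (Z.of_nat k))) by (intros; apply Hsplit).
  rewrite (Series_ext (fun k => Cmod (Cminus (x (- Z.of_nat (S k))%Z) (toZ M b0 (- Z.of_nat (S k))%Z)) ^ 2) (fun k => d (- Z.of_nat (S k))%Z ^ 2 + E (- Z.of_nat (S k))%Z)) by (intros; apply Hsplit).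
  rewrite !Series_plus by auto.
  unfold zSeriesR in HEv. rewrite HQ in HEv.
  set (Q := Rsum (fun k => Cmod (Cminus (x (fr M k)) (b0 k)) ^ 2) (2 * M)) in *.
  set (A1 := Series (fun k => d (Z.of_nat k) ^ 2)) in *. set (A2 := Series (fun k => d (- Z.of_nat (S k))%Z ^ 2)) in *.
  assert (HA1 : 0 <= A1) by (apply Series_nonneg; auto; intros; apply pow2_ge_0).
  assert (HA2 : 0 <= A2) by (apply Series_nonneg; auto; intros; apply pow2_ge_0).
  assert (HQ0 : 0 <= Q) by (apply Rsum_nonneg; intros; apply pow2_ge_0).
  replace (A1 + Series (fun k => E (Z.of_nat k)) + (A2 + Series (fun k => E (- Z.of_nat (S k))%Z)))
    with ((A1 + A2) + Q) by lra.
  pose proof (sqrt_add_le (A1 + A2) Q ltac:(lra) HQ0).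
  assert (sqrt (A1 + A2) <= D1 + D2) by (apply sqrt_le_of_sq; try lra; nra).
  fold D1 D2. lra.
Qed.

Theorem theorem8p2 :
  forall eps : R, 0 < eps < 1 ->
  exists c : R, 0 < c /\
  forall (M N : nat) (tp : nat -> R),
    (0 < M)%nat -> (0 < N)%nat ->
    (forall n, (n < N)%nat -> -1 <= tp n <= 1) ->
    (forall n m, (n < N)%nat -> (m < N)%nat -> tp n = tp m -> n = m) ->
    Rbar_le (density tp N) (Finite (c / INR M)) ->
  forall (x : Z -> C) (f : nat -> C) (e : nat -> C) (y : nat -> C) (eta : R),
    ex_zseriesR (fun j => Cmod (x j)) ->
    (forall n, (n < N)%nat -> is_zsum (fun j => Cmult (x j) (phi j (tp n))) (f n)) ->
    (forall n, (n < N)%nat -> Cmod (e n) <= eta) ->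
    (forall n, (n < N)%nat ->
       y n = Cmult (RtoC (sqrt (tau tp N n))) (Cplus (f n) (e n))) ->
    exists xc : Z -> C,
      supported_in M xc /\
      (forall z, supported_in M z -> residual tp N M xc y <= residual tp N M z y) /\
      (forall z, supported_in M z ->
         (forall z', supported_in M z' -> residual tp N M z y <= residual tp N M z' y) ->
         z = xc) /\
      (forall w : Z -> R, (forall i, 1 <= w i) ->
         ex_zseriesR (fun j => w j * Cmod (Cminus (x j) (PM M x j))) ->
         l2norm (fun j => Cminus (x j) (xc j)) <=
           (1 + 1 / sqrt (1 - eps)) * w1norm w (fun j => Cminus (x j) (PM M x j))
           + 1 / sqrt (1 - eps) * eta).
Proof.
  intros eps Heps. exists (eps / (32 * PI)). split.
  { apply Rdiv_lt_0_compat. lra. pose proof PI_RGT_0. lra. }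
  intros M N tp HM HN Hrange Hinj Hdens x f e y eta Hx Hf He Hy.
  set (K := (2 * M)%nat).
  set (col := colU tp N M).
  set (res2 := fun b => nrm N (fun n => Cminus (y n) (Amul col K b n))).
  assert (Hres : forall z, residual tp N M z y = sqrt (res2 (fun k => z (fr M k)))).
  { intros z. unfold residual, res2. f_equal. rewrite nrm_sym. unfold nrm. apply Rsum_ext; intros. auto. }
  destruct (LS N col K y) as [b0 Hb0].
  assert (Hnrm0 : forall b, 0 <= nrm N b) by apply nrm_nonneg.
  assert (HMZ : forall a : nat -> C, (1 - eps) * Rsum (fun k => Cmod (a k) ^ 2) K <= nrm N (Amul col K a)).
  { intros a. unfold col, K. rewrite nrm_Amul; auto. apply (MZ eps M N); auto.
    apply fr_bound. apply fr_inj. }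
  set (xc := toZ M b0).
  assert (Hxcf : forall k, (k < K)%nat -> xc (fr M k) = b0 k) by (intros; apply toZ_fr; auto).
  assert (Hres_xc : res2 (fun k => xc (fr M k)) = res2 b0).
  { unfold res2. unfold nrm. apply Rsum_ext; intros n _. f_equal. f_equal. f_equal. apply Amul_ext. auto. }
  exists xc. split; [apply toZ_supp|]. split; [|split].
  - intros z Hz. rewrite !Hres. apply sqrt_le_1_alt. rewrite Hres_xc. unfold res2. rewrite (Hb0 (fun k => z (fr M k))).
    pose proof (Hnrm0 (fun n => Cminus (Amul col K (fun k => z (fr M k)) n) (Amul col K b0 n))). lra.
  - intros z Hz Hmin. specialize (Hmin xc (toZ_supp M b0)). rewrite !Hres, Hres_xc in Hmin.
    apply sqrt_le_0 in Hmin; try apply nrm_nonneg. unfold res2 in Hmin. rewrite (Hb0 (fun k => z (fr M k))) in Hmin.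
    set (a := fun k => Cminus (z (fr M k)) (b0 k)).
    assert (Ha : nrm N (Amul col K a) = 0).
    { replace (Amul col K a) with (fun n => Cminus (Amul col K (fun k => z (fr M k)) n) (Amul col K b0 n)).
      pose proof (Hnrm0 (fun n => Cminus (Amul col K (fun k => z (fr M k)) n) (Amul col K b0 n))). unfold res2 in Hmin. lra.
      apply functional_extensionality; intros n. unfold a. rewrite Amul_minus. auto. }
    pose proof (HMZ a). rewrite Ha in H.
    assert (Hs : Rsum (fun k => Cmod (a k) ^ 2) K = 0).
    { assert (0 <= Rsum (fun k => Cmod (a k) ^ 2) K) by (apply Rsum_nonneg; intros; apply pow2_ge_0). nra. }
    pose proof (nrm_zero K a Hs) as Hz0.
    rewrite (supp_toZ M z Hz). unfold xc. apply functional_extensionality; intros j. unfold toZ.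
    destruct (inb M j) eqn:E; auto. apply inb_true in E.
    specialize (Hz0 _ (fr_inv_lt M j E)). unfold a in Hz0.
    apply (f_equal (fun u => Cplus u (b0 (Z.to_nat (j + Z.of_nat M))))) in Hz0.
    replace (Cplus (Cminus (z (fr M (Z.to_nat (j + Z.of_nat M)))) (b0 (Z.to_nat (j + Z.of_nat M)))) (b0 (Z.to_nat (j + Z.of_nat M))))
      with (z (fr M (Z.to_nat (j + Z.of_nat M)))) in Hz0 by ring.
    rewrite Hz0. ring.
  - intros w Hw Hws.
    set (W1 := w1norm w (fun j => Cminus (x j) (PM M x j))).
    set (Dd := zSeriesR (fun j => Cmod (Cminus (x j) (PM M x j)))).
    set (v := fun k => x (fr M k)).
    assert (Heta : 0 <= eta) by (eapply Rle_trans; [apply Cmod_ge_0|apply (He 0%nat HN)]).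
    destruct Hx as [Hx1 Hx2]. destruct Hws as [Hw1 Hw2].
    assert (Ed1 : ex_series (fun k => Cmod (Cminus (x (Z.of_nat k)) (PM M x (Z.of_nat k))))).
    { apply (ex_series_le_R _ (fun k => Cmod (x (Z.of_nat k)))); auto. intros; split; [apply Cmod_ge_0|apply d_le]. }
    assert (Ed2 : ex_series (fun k => Cmod (Cminus (x (- Z.of_nat (S k))%Z) (PM M x (- Z.of_nat (S k))%Z)))).
    { apply (ex_series_le_R _ (fun k => Cmod (x (- Z.of_nat (S k))%Z))); auto. intros; split; [apply Cmod_ge_0|apply d_le]. }
    assert (HDW : Dd <= W1).
    { unfold Dd, W1, w1norm, zSeriesR. apply Rplus_le_compat; apply Series_le; auto; intros k; split;
      try apply Cmod_ge_0; pose proof (Cmod_ge_0 (Cminus (x (Z.of_nat k)) (PM M x (Z.of_nat k))));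
      pose proof (Cmod_ge_0 (Cminus (x (- Z.of_nat (S k))%Z) (PM M x (- Z.of_nat (S k))%Z))).
      specialize (Hw (Z.of_nat k)); nra. specialize (Hw (- Z.of_nat (S k))%Z); nra. }
    assert (HD0 : 0 <= Dd).
    { unfold Dd, zSeriesR. pose proof (Series_nonneg _ (fun k => Cmod_ge_0 _) Ed1).
      pose proof (Series_nonneg _ (fun k => Cmod_ge_0 _) Ed2). lra. }
    assert (Hrv : res2 v <= (Dd + eta) ^ 2).
    { unfold res2, nrm.
      apply Rle_trans with (Rsum (fun n => tau tp N n * (Dd + eta) ^ 2) N).
      - apply Rsum_le; intros n Hn.
        rewrite Hy by auto. unfold col, K. rewrite Amul_TP.
        replace (Cminus (Cmult (RtoC (sqrt (tau tp N n))) (Cplus (f n) (e n)))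
                        (Cmult (RtoC (sqrt (tau tp N n))) (TP v (fr M) (2 * M) (tp n))))
          with (Cmult (RtoC (sqrt (tau tp N n))) (Cplus (Cminus (f n) (TP v (fr M) (2 * M) (tp n))) (e n))) by ring.
        rewrite Cmod_mult, Cmod_R, Rabs_right by (apply Rle_ge, sqrt_pos).
        pose proof (tau_nonneg tp N Hrange Hinj n Hn).
        assert (Hb : Cmod (Cplus (Cminus (f n) (TP v (fr M) (2 * M) (tp n))) (e n)) <= Dd + eta).
        { eapply Rle_trans. apply Cmod_triangle. apply Rplus_le_compat; [|apply He; auto].
          apply tail_bound; [split; auto|apply Hf; auto]. }
        rewrite Rpow_mult_distr, pow2_sqrt by auto. apply Rmult_le_compat_l; auto.
        apply pow_incr; split; auto; apply Cmod_ge_0.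
      - rewrite (Rsum_ext _ (fun n => (Dd + eta) ^ 2 * tau tp N n)) by (intros; ring).
        rewrite Rsum_scal. pose proof (sum_tau_le tp N Hrange Hinj).
        assert (0 <= (Dd + eta) ^ 2) by apply pow2_ge_0.
        change (Rsum (tau tp N) N) with (Rsum (fun n => tau tp N n) N). nra. }
    set (Q := Rsum (fun k => Cmod (Cminus (x (fr M k)) (b0 k)) ^ 2) K).
    assert (HQ : (1 - eps) * Q <= (Dd + eta) ^ 2).
    { pose proof (HMZ (fun k => Cminus (v k) (b0 k))) as H1.
      replace (Amul col K (fun k => Cminus (v k) (b0 k))) with (fun n => Cminus (Amul col K v n) (Amul col K b0 n)) in H1.
      2: { apply functional_extensionality; intros n. rewrite Amul_minus; auto. }
      pose proof (Hb0 v). pose proof (Hnrm0 (fun n => Cminus (y n) (Amul col K b0 n))).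
      fold res2 in H0. unfold res2 in *. unfold Q, v in *. lra. }
    assert (Hs : 0 < sqrt (1 - eps)) by (apply sqrt_lt_R0; lra).
    assert (HsQ : sqrt Q <= (Dd + eta) / sqrt (1 - eps)).
    { apply sqrt_le_of_sq. apply Rsum_nonneg; intros; apply pow2_ge_0.
      apply Rdiv_le_0_compat; lra.
      unfold Rdiv. rewrite Rpow_mult_distr, <- Rinv_pow by lra. rewrite pow2_sqrt by lra.
      apply (Rmult_le_reg_r (1 - eps)); [lra|]. rewrite Rmult_assoc, Rinv_l by lra. lra. }
    eapply Rle_trans. apply (l2_split M x b0). split; auto.
    fold Dd. change (sqrt (Rsum (fun k => Cmod (Cminus (x (fr M k)) (b0 k)) ^ 2) (2 * M))) with (sqrt Q).
    assert ((1 + 1 / sqrt (1 - eps)) * W1 = W1 + 1 / sqrt (1 - eps) * W1) by ring.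
    assert ((Dd + eta) / sqrt (1 - eps) <= (W1 + eta) / sqrt (1 - eps)).
    { unfold Rdiv. apply Rmult_le_compat_r. apply Rlt_le, Rinv_0_lt_compat; auto. lra. }
    assert ((W1 + eta) / sqrt (1 - eps) = 1 / sqrt (1 - eps) * W1 + 1 / sqrt (1 - eps) * eta) by (field; lra).
    lra.
Qed.
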